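(* Let $u_0,u_1,\dots,u_{n+1}\in\mathbb{Z}^2$ with $u_{n+1}=u_0$ and $u_i\times u_{i+1}=1$ for $0\le i\le n$, such that the lines with normals $u_0,\dots,u_n$, taken in counterclockwise order, go exactly once around the origin (covering all of $\mathbb{R}^2$). Let $z\in\mathbb{C}$ and $\underline\omega\in\mathbb{C}^2$ with $\underline\omega\times u_i\notin\mathbb{R}$ for all $i$. Then $$\prod_{i=0}^{n}\big(e^{2\pi iz}\,\big|\,e^{2\pi i\,\underline\omega\times u_i},e^{-2\pi i\,\underline\omega\times u_{i+1}}\big)_\infty=1-e^{2\pi iz}.$$
   Context: For $a,b\in\mathbb{C}^2$, $a\times b=\det[a,b]=a_1b_2-a_2b_1$. q-shifted factorial: for $x\in\mathbb{C}$ and $q_j=e^{2\pi i\omega_j}$, $\omega_j\in\mathbb{C}\setminus\mathbb{R}$: if all $|q_j|<1$, $(x|q_0,q_1)_\infty=\prod_{j_0,j_1\ge0}(1-xq_0^{j_0}q_1^{j_1})$; in general (symmetric in the $q_j$), if $|q_0|>1>|q_1|$ then $(x|q_0,q_1)_\infty=(q_0^{-1}x|q_0^{-1},q_1)_\infty^{-1}$, and if both $|q_0|,|q_1|>1$ then $(x|q_0,q_1)_\infty=(q_0^{-1}q_1^{-1}x|q_0^{-1},q_1^{-1})_\infty$. *)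

(* Defs.v *)
From Stdlib Require Import Reals ZArith ClassicalEpsilon.
From Coquelicot Require Import Coquelicot.
Open Scope R_scope.

Definition crossZ (a b : Z * Z) : Z := (fst a * snd b - snd a * fst b)%Z.

Definition crossCZ (w : C * C) (u : Z * Z) : C :=
  (fst w * RtoC (IZR (snd u)) - snd w * RtoC (IZR (fst u)))%C.

(* e^{2 pi i w} written out: e^{-2 pi Im w} (cos (2 pi Re w) + i sin (2 pi Re w)) *)
Definition e2pi (w : C) : C :=
  (exp (-2 * PI * Im w) * cos (2 * PI * Re w),
   exp (-2 * PI * Im w) * sin (2 * PI * Re w)).

Fixpoint prodC (f : nat -> C) (N : nat) : C :=
  match N with
  | O => RtoC 1
  | S N' => (prodC f N' * f N')%C
  end.

Definition qpoch_part (x q0 q1 : C) (N : nat) : C :=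
  prodC (fun j0 => prodC (fun j1 => (RtoC 1 - x * Cpow q0 j0 * Cpow q1 j1)%C) N) N.

(* the limit of the truncated products (the value of the infinite product
   prod_{j0,j1>=0} (1 - x q0^j0 q1^j1) when |q0|,|q1| < 1) *)
Definition qpoch_lim (x q0 q1 : C) : C :=
  epsilon (inhabits (RtoC 0))
    (fun L => filterlim (qpoch_part x q0 q1) eventually (locally L)).

(* (x | q0, q1)_infty, extended to all |q0|,|q1| <> 1 as in the paper
   (value 0 is junk when some |q_j| = 1, a case never used). *)
Definition qpoch (x q0 q1 : C) : C :=
  match Rlt_dec (Cmod q0) 1, Rlt_dec 1 (Cmod q0),
        Rlt_dec (Cmod q1) 1, Rlt_dec 1 (Cmod q1) with
  | left _, _, left _, _ => qpoch_lim x q0 q1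
  | _, left _, left _, _ => Cinv (qpoch_lim (Cinv q0 * x) (Cinv q0) q1)
  | left _, _, _, left _ => Cinv (qpoch_lim (Cinv q1 * x) q0 (Cinv q1))
  | _, left _, _, left _ => qpoch_lim (Cinv q0 * Cinv q1 * x) (Cinv q0) (Cinv q1)
  | _, _, _, _ => RtoC 0
  end.

(* (x | q0, q1)_infty is finite (not at a pole): in the cases defined by a
   reciprocal, the infinite product in the denominator is nonzero. *)
Definition qpoch_finite (x q0 q1 : C) : Prop :=
  (1 < Cmod q0 -> Cmod q1 < 1 -> qpoch_lim (Cinv q0 * x) (Cinv q0) q1 <> RtoC 0) /\
  (Cmod q0 < 1 -> 1 < Cmod q1 -> qpoch_lim (Cinv q1 * x) q0 (Cinv q1) <> RtoC 0).

Definition angleZ (a b : Z * Z) : R :=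
  let a1 := IZR (fst a) in let a2 := IZR (snd a) in
  let b1 := IZR (fst b) in let b2 := IZR (snd b) in
  acos ((a1 * b1 + a2 * b2) / (sqrt (a1 ^ 2 + a2 ^ 2) * sqrt (b1 ^ 2 + b2 ^ 2))).

(* Main.v *)
Require Import Defs.
From Stdlib Require Import Reals ZArith Lra Lia Psatz List Permutation ClassicalEpsilon.
From Coquelicot Require Import Coquelicot.
Open Scope R_scope.
Lemma up_eq (x : R) (z : Z) : IZR z - 1 <= x -> x < IZR z -> up x = z.
Proof. intros H1 H2. symmetry. apply tech_up; lra. Qed.

Lemma up_div (x : R) (z : Z) : 2 * PI * (IZR z - 1) <= x -> x < 2 * PI * IZR z ->
  up (x / (2 * PI)) = z.
Proof.
  intros H1 H2. pose proof PI_RGT_0. apply up_eq.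
  - apply Rmult_le_reg_r with (2*PI); [lra|]. unfold Rdiv; rewrite Rmult_assoc, Rinv_l; lra.
  - apply Rmult_lt_reg_r with (2*PI); [lra|]. unfold Rdiv; rewrite Rmult_assoc, Rinv_l; lra.
Qed.

Lemma up_shift (x : R) (m : Z) : up (x + IZR m) = (up x + m)%Z.
Proof.
  destruct (archimed x) as [H1 H2].
  apply up_eq; rewrite plus_IZR; lra.
Qed.

Lemma sin_shiftZ (x : R) (m : Z) : sin (x + 2 * IZR m * PI) = sin x.
Proof.
  destruct (Z_le_gt_dec 0 m) as [Hm|Hm].
  - rewrite <- (Z2Nat.id m) by lia. rewrite <- INR_IZR_INZ. apply sin_period.
  - replace m with (- Z.of_nat (Z.to_nat (- m)))%Z by lia.
    rewrite opp_IZR, <- INR_IZR_INZ.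
    set (k := Z.to_nat (-m)).
    rewrite <- (sin_period (x + 2 * - INR k * PI) k). f_equal. ring.
Qed.

Definition sg (x : R) : Z := if Rlt_dec 0 x then 1%Z else (-1)%Z.

Definition Ncnt (L : R) : Z := (up ((L - PI) / (2 * PI)) - up (- L / (2 * PI)))%Z.

Lemma Ncnt_shift (L : R) (m : Z) : Ncnt (L + 2 * PI * IZR m) = (Ncnt L + 2 * m)%Z.
Proof.
  unfold Ncnt. pose proof PI_RGT_0.
  replace ((L + 2 * PI * IZR m - PI) / (2 * PI)) with ((L - PI) / (2 * PI) + IZR m) by (field; lra).
  replace (- (L + 2 * PI * IZR m) / (2 * PI)) with (- L / (2 * PI) + IZR (- m)) by (rewrite opp_IZR; field; lra).
  rewrite !up_shift. lia.
Qed.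

Lemma sg_pos x : 0 < x -> sg x = 1%Z.
Proof. intros; unfold sg; destruct (Rlt_dec 0 x); [auto|lra]. Qed.
Lemma sg_npos x : x <= 0 -> sg x = (-1)%Z.
Proof. intros; unfold sg; destruct (Rlt_dec 0 x); [lra|auto]. Qed.

Lemma step_reduced (t d : R) : 0 <= t < 2 * PI -> 0 < d < PI ->
  (sg (sin t) * sg (sin (t + d)) = 1 - 2 * (Ncnt (t + d) - Ncnt t))%Z.
Proof.
  intros [Ht1 Ht2] [Hd1 Hd2]. pose proof PI_RGT_0 as HP.
  unfold Ncnt.
  destruct (Req_dec t 0) as [H0|H0].
  { subst t. rewrite sin_0, Rplus_0_l.
    rewrite (up_div (0 - PI) 0), (up_div (-0) 1), (up_div (d - PI) 0), (up_div (-d) 0);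
      try lra.
    rewrite (sg_npos 0), (sg_pos (sin d)) by (try apply sin_gt_0; lra). lia. }
  destruct (Rlt_le_dec t PI) as [H1|H1].
  { rewrite (sg_pos (sin t)) by (apply sin_gt_0; lra).
    rewrite (up_div (t - PI) 0), (up_div (-t) 0) by lra.
    destruct (Rlt_le_dec (t + d) PI) as [H2|H2].
    - rewrite (sg_pos (sin (t+d))) by (apply sin_gt_0; lra).
      rewrite (up_div (t + d - PI) 0), (up_div (-(t+d)) 0) by lra. lia.
    - rewrite (sg_npos (sin (t+d))).
      + rewrite (up_div (t + d - PI) 1), (up_div (-(t+d)) 0) by lra. lia.
      + destruct (Req_dec (t+d) PI) as [E|E]; [rewrite E, sin_PI; lra|].
        left; apply sin_lt_0; lra. }
  rewrite (sg_npos (sin t)).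
  2:{ destruct (Req_dec t PI) as [E|E]; [rewrite E, sin_PI; lra|].
      left; apply sin_lt_0; lra. }
  rewrite (up_div (t - PI) 1), (up_div (-t) 0) by lra.
  destruct (Rlt_le_dec (t + d) (2*PI)) as [H2|H2].
  { rewrite (sg_npos (sin (t+d))) by (left; apply sin_lt_0; lra).
    rewrite (up_div (t + d - PI) 1), (up_div (-(t+d)) 0) by lra. lia. }
  destruct (Req_dec (t+d) (2*PI)) as [E|E].
  { rewrite E, sin_2PI, (sg_npos 0) by lra.
    rewrite (up_div (2*PI - PI) 1), (up_div (-(2*PI)) 0) by lra. lia. }
  rewrite (sg_pos (sin (t+d))).
  - rewrite (up_div (t + d - PI) 1), (up_div (-(t+d)) (-1)) by (rewrite ?opp_IZR; lra). lia.
  - replace (t + d) with ((t + d - 2 * PI) + 2 * IZR 1 * PI) by (simpl; ring).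
    rewrite sin_shiftZ. apply sin_gt_0; lra.
Qed.

Lemma step_general (L d : R) : 0 < d < PI ->
  (sg (sin L) * sg (sin (L + d)) = 1 - 2 * (Ncnt (L + d) - Ncnt L))%Z.
Proof.
  intros Hd. pose proof PI_RGT_0 as HP.
  set (m := (up (L / (2 * PI)) - 1)%Z).
  destruct (archimed (L / (2 * PI))) as [A1 A2].
  assert (Hm1 : IZR m <= L / (2*PI)) by (unfold m; rewrite minus_IZR; simpl; lra).
  assert (Hm2 : L / (2*PI) < IZR m + 1) by (unfold m; rewrite minus_IZR; simpl; lra).
  set (t := L - 2 * PI * IZR m).
  assert (Ht : 0 <= t < 2 * PI).
  { unfold t. split.
    - apply Rmult_le_compat_r with (r := 2*PI) in Hm1; [|lra].
      unfold Rdiv in Hm1. rewrite Rmult_assoc, Rinv_l in Hm1; lra.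
    - apply Rmult_lt_compat_r with (r := 2*PI) in Hm2; [|lra].
      unfold Rdiv in Hm2. rewrite Rmult_assoc, Rinv_l in Hm2; lra. }
  pose proof (step_reduced t d Ht Hd) as S.
  replace L with (t + 2 * PI * IZR m) by (unfold t; ring).
  replace (t + 2 * PI * IZR m + d) with ((t + d) + 2 * PI * IZR m) by ring.
  rewrite !Ncnt_shift.
  replace (t + 2 * PI * IZR m) with (t + 2 * IZR m * PI) by ring.
  replace (t + d + 2 * PI * IZR m) with (t + d + 2 * IZR m * PI) by ring.
  rewrite !sin_shiftZ. lia.
Qed.

Lemma Ncnt_2PI (L : R) : Ncnt (L + 2 * PI) = (Ncnt L + 2)%Z.
Proof.
  replace (L + 2 * PI) with (L + 2 * PI * IZR 1) by (simpl; ring).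
  rewrite Ncnt_shift. lia.
Qed.
Definition vx (u : Z * Z) : R := IZR (fst u).
Definition vy (u : Z * Z) : R := IZR (snd u).
Definition nrm (u : Z * Z) : R := sqrt (vx u ^ 2 + vy u ^ 2).
Definition dotZ (a b : Z * Z) : R := vx a * vx b + vy a * vy b.
Definition crossR (r : R * R) (u : Z * Z) : R := fst r * vy u - snd r * vx u.
Definition dotR (r : R * R) (u : Z * Z) : R := fst r * vx u + snd r * vy u.

Lemma crossZ_R (a b : Z * Z) : IZR (crossZ a b) = vx a * vy b - vy a * vx b.
Proof. unfold crossZ, vx, vy. rewrite minus_IZR, !mult_IZR. ring. Qed.

Lemma angle_facts (a b : Z * Z) : crossZ a b = 1%Z ->
  0 < nrm a /\ 0 < nrm b /\
  0 < angleZ a b < PI /\ cos (angleZ a b) * nrm a * nrm b = dotZ a b /\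
  sin (angleZ a b) * nrm a * nrm b = 1.
Proof.
  intros Hc. apply (f_equal IZR) in Hc. rewrite crossZ_R in Hc.
  set (A := vx a ^ 2 + vy a ^ 2). set (B := vx b ^ 2 + vy b ^ 2).
  assert (HAB : A * B = dotZ a b ^ 2 + 1).
  { transitivity (dotZ a b ^ 2 + (vx a * vy b - vy a * vx b) ^ 2).
    - unfold A, B, dotZ. ring.
    - rewrite Hc. ring. }
  assert (HA0 : 0 <= A) by (unfold A; nra).
  assert (HB0 : 0 <= B) by (unfold B; nra).
  assert (HA : 0 < A) by (destruct (Req_dec A 0) as [E|E]; [rewrite E in HAB; nra|lra]).
  assert (HB : 0 < B) by (destruct (Req_dec B 0) as [E|E]; [rewrite E in HAB; nra|lra]).
  assert (Hna : 0 < nrm a) by (apply sqrt_lt_R0; exact HA).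
  assert (Hnb : 0 < nrm b) by (apply sqrt_lt_R0; exact HB).
  assert (Ena : nrm a * nrm a = A) by (apply sqrt_sqrt; lra).
  assert (Enb : nrm b * nrm b = B) by (apply sqrt_sqrt; lra).
  set (c := dotZ a b / (nrm a * nrm b)).
  assert (Hang : angleZ a b = acos c) by reflexivity.
  assert (HP : (nrm a * nrm b) ^ 2 = dotZ a b ^ 2 + 1).
  { rewrite <- HAB, <- Ena, <- Enb. ring. }
  assert (Hc2 : 1 - c ^ 2 = (1 / (nrm a * nrm b)) ^ 2).
  { unfold c. unfold Rdiv. rewrite !Rpow_mult_distr, pow_inv, HP.
    field. nra. }
  assert (Hc1 : -1 < c < 1).
  { assert (c ^ 2 < 1).
    { assert (0 < (1 / (nrm a * nrm b)) ^ 2).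
      { apply pow_lt. apply Rdiv_lt_0_compat; nra. }
      lra. }
    split; nra. }
  rewrite Hang. split; [auto|]. split; [auto|].
  split; [apply acos_bound_lt; auto|].
  split.
  - rewrite cos_acos by lra. unfold c. field. nra.
  - rewrite sin_acos by lra. replace (1 - c²) with ((1 / (nrm a * nrm b)) ^ 2)
      by (rewrite <- Hc2; unfold Rsqr; ring).
    rewrite sqrt_pow2.
    + field. nra.
    + left. apply Rdiv_lt_0_compat; nra.
Qed.

Lemma exists_angle (p q : R) : p ^ 2 + q ^ 2 = 1 -> exists L, cos L = p /\ sin L = q.
Proof.
  intros H.
  assert (Hp : -1 <= p <= 1) by (split; nra).
  assert (Hs : sqrt (1 - p²) = Rabs q).
  { replace (1 - p²) with (q ^ 2) by (unfold Rsqr; lra).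
    rewrite <- sqrt_Rsqr_abs. unfold Rsqr; f_equal; ring. }
  destruct (Rle_dec 0 q) as [Hq|Hq].
  - exists (acos p). rewrite cos_acos, sin_acos by auto. rewrite Hs, Rabs_pos_eq; auto.
  - exists (- acos p). rewrite cos_neg, sin_neg, cos_acos, sin_acos by auto.
    rewrite Hs, Rabs_left; lra.
Qed.
Fixpoint sumZ (f : nat -> Z) (n : nat) : Z :=
  match n with O => f O | S k => (sumZ f k + f (S k))%Z end.

Lemma sumZ_ext (f g : nat -> Z) n : (forall i, (i <= n)%nat -> f i = g i) -> sumZ f n = sumZ g n.
Proof. induction n; intros H; simpl; [apply H; lia|]. rewrite IHn by (intros; apply H; lia). rewrite H; lia. Qed.

Lemma sumZ_tele (g : nat -> Z) n : sumZ (fun i => (g (S i) - g i)%Z) n = (g (S n) - g O)%Z.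
Proof. induction n; simpl; [lia|]. rewrite IHn. lia. Qed.

Lemma sumZ_lin (f : nat -> Z) (a b : Z) n :
  sumZ (fun i => (a + b * f i)%Z) n = (Z.of_nat (S n) * a + b * sumZ f n)%Z.
Proof. induction n; simpl sumZ; [simpl Z.of_nat; ring|]. rewrite IHn. rewrite (Nat2Z.inj_succ (S n)). unfold Z.succ. ring. Qed.

Fixpoint sumR (f : nat -> R) (n : nat) : R :=
  match n with O => 0 | S k => sumR f k + f k end.

Lemma sumR_f_R0 (f : nat -> R) n : sumR f (S n) = sum_f_R0 f n.
Proof. induction n; simpl in *; [ring|]. rewrite <- IHn. ring. Qed.

Lemma sg_scale x k : 0 < k -> sg (x * k) = sg x.
Proof.
  intros Hk. unfold sg. destruct (Rlt_dec 0 (x*k)), (Rlt_dec 0 x); auto.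
  - exfalso. apply n. destruct (Rle_dec x 0); [|lra]. nra.
  - exfalso. apply n. nra.
Qed.

Lemma sign_sum (n : nat) (u : nat -> Z * Z) (r : R * R) :
  u (S n) = u O ->
  (forall i, (i <= n)%nat -> crossZ (u i) (u (S i)) = 1%Z) ->
  sum_f_R0 (fun i => angleZ (u i) (u (S i))) n = 2 * PI ->
  r <> (0, 0) ->
  sumZ (fun i => (sg (crossR r (u i)) * sg (crossR r (u (S i))))%Z) n = (Z.of_nat n - 3)%Z.
Proof.
  intros Hper Hcr Hsum Hr.
  destruct r as [r1 r2].
  set (nr := sqrt (r1 ^ 2 + r2 ^ 2)).
  assert (Hr0 : 0 < r1 ^ 2 + r2 ^ 2).
  { destruct (Req_dec r1 0), (Req_dec r2 0); [subst; congruence| nra..]. }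
  assert (Hnr : 0 < nr) by (apply sqrt_lt_R0; auto).
  assert (Enr : nr * nr = r1 ^ 2 + r2 ^ 2) by (apply sqrt_sqrt; lra).
  set (th := fun i => angleZ (u i) (u (S i))).
  assert (Hna : forall i, (i <= S n)%nat -> 0 < nrm (u i)).
  { intros i Hi. destruct (Nat.eq_dec i (S n)) as [E|E].
    - subst i. rewrite Hper. apply (angle_facts _ _ (Hcr O ltac:(lia))).
    - apply (angle_facts _ _ (Hcr i ltac:(lia))). }
  assert (Ena : forall i, (i <= S n)%nat -> nrm (u i) * nrm (u i) = vx (u i) ^ 2 + vy (u i) ^ 2).
  { intros i Hi. apply sqrt_sqrt. nra. }
  destruct (exists_angle (dotR (r1, r2) (u O) / (nr * nrm (u O)))
                         (crossR (r1, r2) (u O) / (nr * nrm (u O)))) as [L0 [HL0c HL0s]].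
  { pose proof (Hna O ltac:(lia)) as H0. pose proof (Ena O ltac:(lia)) as E0.
    unfold dotR, crossR; cbn [fst snd].
    unfold Rdiv. rewrite !Rpow_mult_distr, pow_inv.
    replace ((nr * nrm (u O)) ^ 2) with ((r1 ^ 2 + r2 ^ 2) * (vx (u O) ^ 2 + vy (u O) ^ 2))
      by (rewrite <- Enr, <- E0; ring).
    field. split; nra. }
  set (Lf := fun i => L0 + sumR th i).
  assert (Inv : forall i, (i <= S n)%nat ->
     cos (Lf i) * nr * nrm (u i) = dotR (r1, r2) (u i) /\
     sin (Lf i) * nr * nrm (u i) = crossR (r1, r2) (u i)).
  { induction i as [|i IH]; intros Hi.
    - unfold Lf; simpl. rewrite Rplus_0_r, HL0c, HL0s.
      pose proof (Hna O ltac:(lia)). split; field; nra.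
    - destruct (IH ltac:(lia)) as [IHc IHs].
      destruct (angle_facts _ _ (Hcr i ltac:(lia))) as [Ha [Hb [_ [Hc Hs]]]].
      pose proof (Ena i ltac:(lia)) as Ea.
      assert (Lf (S i) = Lf i + th i) by (unfold Lf; simpl; ring).
      rewrite H. rewrite cos_plus, sin_plus. unfold th.
      set (na := nrm (u i)) in *. set (nb := nrm (u (S i))) in *.
      set (CL := cos (Lf i)) in *. set (SL := sin (Lf i)) in *.
      set (CT := cos (angleZ (u i) (u (S i)))) in *.
      set (ST := sin (angleZ (u i) (u (S i)))) in *.
      pose proof (Hcr i ltac:(lia)) as Hc1. apply (f_equal IZR) in Hc1. rewrite crossZ_R in Hc1.
      unfold dotR, crossR, dotZ in *; simpl in *.
      split; apply Rmult_eq_reg_r with (na * na); try nra.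
      + transitivity ((CL * nr * na) * (CT * na * nb) - (SL * nr * na) * (ST * na * nb)); [ring|].
        rewrite IHc, IHs, Hc, Hs, Ea. rewrite <- Hc1 at 1. ring.
      + transitivity ((SL * nr * na) * (CT * na * nb) + (CL * nr * na) * (ST * na * nb)); [ring|].
        rewrite IHc, IHs, Hc, Hs, Ea. rewrite <- Hc1 at 1. ring. }
  assert (Hsg : forall i, (i <= S n)%nat -> sg (crossR (r1, r2) (u i)) = sg (sin (Lf i))).
  { intros i Hi. rewrite <- (proj2 (Inv i Hi)).
    replace (sin (Lf i) * nr * nrm (u i)) with (sin (Lf i) * (nr * nrm (u i))) by ring.
    apply sg_scale. pose proof (Hna i Hi). nra. }
  rewrite (sumZ_ext _ (fun i => (1 + (-2) * (Ncnt (Lf (S i)) - Ncnt (Lf i)))%Z)).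
  - rewrite sumZ_lin, (sumZ_tele (fun k => Ncnt (Lf k))).
    assert (Lf (S n) = Lf O + 2 * PI).
    { unfold Lf. rewrite sumR_f_R0. simpl. unfold th. rewrite Hsum. ring. }
    rewrite H, Ncnt_2PI. rewrite Nat2Z.inj_succ. lia.
  - intros i Hi. rewrite !Hsg by lia.
    replace (Lf (S i)) with (Lf i + th i) by (unfold Lf; simpl; ring).
    destruct (angle_facts _ _ (Hcr i Hi)) as [_ [_ [Hth _]]].
    rewrite step_general by (unfold th; lra). lia.
Qed.
Open Scope Z_scope.
Definition vadd (a b : Z * Z) : Z * Z := (fst a + fst b, snd a + snd b).
Definition vneg (a : Z * Z) : Z * Z := (- fst a, - snd a).
Definition vsub (a b : Z * Z) : Z * Z := vadd a (vneg b).
Definition cone_d (e : bool) (a : Z * Z) : Z * Z := if e then a else vneg a.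
Definition cone_c (e0 e1 : bool) (a b : Z * Z) : Z * Z :=
  vadd (if e0 then (0, 0) else vneg a) (if e1 then b else (0, 0)).
Definition inCone (c d0 d1 v : Z * Z) : bool :=
  (0 <=? crossZ d0 d1 * crossZ (vsub v c) d1) && (0 <=? crossZ d0 d1 * crossZ d0 (vsub v c)).
Definition pm (b : bool) : Z := if b then 1 else -1.
Definition Asg (a v : Z * Z) : Z := if 0 <? crossZ a v then 1 else -1.

Lemma cone_term (a b v : Z * Z) (e0 e1 : bool) : crossZ a b = 1 ->
  4 * (pm (xorb e0 e1) * (if inCone (cone_c e0 e1 a b) (cone_d e0 a) (cone_d e1 b) v then 1 else 0))
  = - (pm e0 * pm e1 + Asg a v * pm e0 - Asg b v * pm e1 - Asg a v * Asg b v).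
Proof.
  intros H.
  assert (Hd : crossZ (cone_d e0 a) (cone_d e1 b) = - pm (xorb e0 e1)).
  { destruct a, b, e0, e1; unfold cone_d, vneg, pm, crossZ in *; simpl in *; lia. }
  unfold inCone. rewrite Hd.
  destruct a as [a1 a2], b as [b1 b2], v as [v1 v2].
  unfold Asg, cone_c, cone_d, vsub, vadd, vneg, pm in *.
  unfold crossZ in *; cbn [fst snd] in *.
  destruct e0, e1; cbn [xorb andb] in *;
  repeat match goal with
  | |- context [Z.leb ?x ?y] => destruct (Z.leb_spec x y)
  | |- context [Z.ltb ?x ?y] => destruct (Z.ltb_spec x y)
  end; cbn [andb fst snd] in *; lia.
Qed.
Close Scope Z_scope.
Definition ell (w : C * C) (u : Z * Z) : R := Im (crossCZ w u).
Definition epsb (w : C * C) (u : Z * Z) : bool := if Rlt_dec 0 (ell w u) then true else false.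

Definition coneC (w : C * C) (a b : Z * Z) : Z * Z := cone_c (epsb w a) (epsb w b) a b.
Definition coneD0 (w : C * C) (a : Z * Z) : Z * Z := cone_d (epsb w a) a.
Definition coneD1 (w : C * C) (b : Z * Z) : Z * Z := cone_d (epsb w b) b.
Definition coneS (w : C * C) (a b : Z * Z) : bool := xorb (epsb w a) (epsb w b).
Definition inConeW (w : C * C) (a b v : Z * Z) : bool :=
  inCone (coneC w a b) (coneD0 w a) (coneD1 w b) v.

Lemma ell_cross (w : C * C) (u : Z * Z) : ell w u = crossR (Im (fst w), Im (snd w)) u.
Proof.
  destruct w as [[a b] [c d]]. unfold ell, crossCZ, crossR, vx, vy.
  unfold Im, RtoC, Cminus, Cmult, Copp, Cplus; simpl. ring.
Qed.

Lemma sumZ_add (f g : nat -> Z) n : sumZ (fun i => (f i + g i)%Z) n = (sumZ f n + sumZ g n)%Z.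
Proof. induction n; simpl; lia. Qed.
Lemma sumZ_scal (f : nat -> Z) (c : Z) n : sumZ (fun i => (c * f i)%Z) n = (c * sumZ f n)%Z.
Proof. induction n; simpl; [lia|]. rewrite IHn. ring. Qed.

Lemma Asg_sg (a v : Z * Z) : Asg a v = sg (crossR (- vx v, - vy v) a).
Proof.
  assert (E : crossR (- vx v, - vy v) a = IZR (crossZ a v)).
  { destruct a, v. unfold crossR, crossZ, vx, vy; simpl.
    rewrite minus_IZR, !mult_IZR. ring. }
  rewrite E. unfold Asg, sg.
  destruct (Z.ltb_spec 0 (crossZ a v)) as [H|H]; destruct (Rlt_dec 0 (IZR (crossZ a v))) as [H'|H']; auto.
  - exfalso; apply H'; apply IZR_lt; auto.
  - apply lt_IZR in H'. lia.
Qed.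

Lemma pm_eps_sg (w : C * C) (a : Z * Z) : pm (epsb w a) = sg (crossR (Im (fst w), Im (snd w)) a).
Proof. unfold pm, epsb, sg. rewrite ell_cross. destruct Rlt_dec; auto. Qed.

Lemma cone_sum (n : nat) (u : nat -> Z * Z) (w : C * C) (v : Z * Z) :
  u (S n) = u O ->
  (forall i, (i <= n)%nat -> crossZ (u i) (u (S i)) = 1%Z) ->
  sum_f_R0 (fun i => angleZ (u i) (u (S i))) n = 2 * PI ->
  ell w (u O) <> 0 ->
  sumZ (fun i => (pm (coneS w (u i) (u (S i))) *
                  (if inConeW w (u i) (u (S i)) v then 1 else 0))%Z) n
  = (if (Z.eqb (fst v) 0 && Z.eqb (snd v) 0)%bool then 1 else 0)%Z.
Proof.
  intros Hper Hcr Hsum Hl.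
  assert (H4 : (4 * sumZ (fun i => (pm (coneS w (u i) (u (S i))) *
                  (if inConeW w (u i) (u (S i)) v then 1 else 0))%Z) n
     = - sumZ (fun i => pm (epsb w (u i)) * pm (epsb w (u (S i)))) n
       + sumZ (fun i => (Asg (u (S i)) v * pm (epsb w (u (S i))) - Asg (u i) v * pm (epsb w (u i)))) n
       + sumZ (fun i => Asg (u i) v * Asg (u (S i)) v) n)%Z).
  { rewrite <- sumZ_scal.
    rewrite (sumZ_ext _ (fun i => (-1 * (pm (epsb w (u i)) * pm (epsb w (u (S i))))
        + (Asg (u (S i)) v * pm (epsb w (u (S i))) - Asg (u i) v * pm (epsb w (u i)))
        + Asg (u i) v * Asg (u (S i)) v)%Z)).
    - rewrite !sumZ_add, sumZ_scal. lia.
    - intros i Hi. unfold coneS, inConeW, coneC, coneD0, coneD1.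
      rewrite cone_term by (apply Hcr; auto). lia. }
  rewrite (sumZ_tele (fun k => (Asg (u k) v * pm (epsb w (u k)))%Z)) in H4.
  rewrite Hper in H4.
  rewrite (sumZ_ext (fun i => (pm (epsb w (u i)) * pm (epsb w (u (S i))))%Z)
             (fun i => (sg (crossR (Im (fst w), Im (snd w)) (u i)) *
                        sg (crossR (Im (fst w), Im (snd w)) (u (S i))))%Z)) in H4
    by (intros; rewrite !pm_eps_sg; auto).
  rewrite sign_sum in H4; auto.
  2:{ intros E. apply Hl. rewrite ell_cross, E. unfold crossR; simpl; ring. }
  destruct v as [v1 v2]. simpl fst; simpl snd.
  destruct (Z.eqb_spec v1 0), (Z.eqb_spec v2 0); simpl.
  - subst. rewrite (sumZ_ext (fun i => (Asg (u i) (0%Z, 0%Z) * Asg (u (S i)) (0%Z, 0%Z))%Z) (fun _ => 1%Z)) in H4.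
    + assert (forall m, sumZ (fun _ => 1%Z) m = Z.of_nat (S m)).
      { induction m; simpl sumZ; [simpl; lia|]. rewrite IHm. rewrite (Nat2Z.inj_succ (S m)). lia. }
      rewrite H in H4. rewrite Nat2Z.inj_succ in H4. lia.
    + intros i _. unfold Asg, crossZ; simpl. rewrite !Z.mul_0_r. simpl. reflexivity.
  - all: rewrite (sumZ_ext (fun i => (Asg (u i) (v1, v2) * Asg (u (S i)) (v1, v2))%Z)
       (fun i => (sg (crossR ((- vx (v1, v2))%R, (- vy (v1, v2))%R) (u i)) *
                  sg (crossR ((- vx (v1, v2))%R, (- vy (v1, v2))%R) (u (S i))))%Z)) in H4
       by (intros; rewrite !Asg_sg; auto);
     rewrite sign_sum in H4; auto; [lia|];
     unfold vx, vy; simpl; intros E; injection E; intros E2 E1.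
    + apply n0. apply eq_IZR. lra.
  - apply n0. apply eq_IZR. lra.
  - apply n0. apply eq_IZR. lra.
Qed.
Lemma Cmod_ball (x y : C) (eps : R) : Cmod (x - y) < eps -> ball y eps x.
Proof.
  intros H. apply (norm_compat1 (K := C_AbsRing) (V := C_NormedModule)). exact H.
Qed.

Lemma ball_Cmod (x y : C) (eps : posreal) : ball y eps x -> Cmod (x - y) < 2 * eps.
Proof.
  intros H. pose proof (C_NormedModule_mixin_compat2 y x eps H).
  assert (sqrt 2 < 2).
  { rewrite <- (sqrt_pow2 2) at 2 by lra. apply sqrt_lt_1_alt. lra. }
  pose proof (cond_pos eps).
  change (Cmod (x - y) < sqrt 2 * eps) in H0. nra.
Qed.

Lemma lim_unique (f : nat -> C) (l1 l2 : C) :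
  filterlim f eventually (locally l1) -> filterlim f eventually (locally l2) -> l1 = l2.
Proof.
  intros H1 H2. exact (filterlim_locally_unique (K := C_AbsRing) (V := C_NormedModule) f l1 l2 H1 H2).
Qed.

Lemma cauchy_lim (f : nat -> C) :
  (forall eps, 0 < eps -> exists N, forall m n, (N <= m)%nat -> (N <= n)%nat -> Cmod (f m - f n) < eps) ->
  exists l : C, filterlim f eventually (locally l).
Proof.
  intros H.
  destruct (proj1 (filterlim_locally_cauchy (U := C_CompleteNormedModule) (F := eventually) f)) as [l Hl].
  - intros eps. destruct (H eps (cond_pos eps)) as [N HN].
    exists (fun n => (N <= n)%nat). split.
    + exists N. auto.
    + intros u v Hu Hv. apply Cmod_ball. apply HN; auto.
  - exists l. exact Hl.
Qed.

Lemma lim_conv (f : nat -> C) (l : C) : filterlim f eventually (locally l) ->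
  forall eps, 0 < eps -> exists N, forall n, (N <= n)%nat -> Cmod (f n - l) < eps.
Proof.
  intros H eps Heps.
  destruct (proj1 (filterlim_locally f l) H (mkposreal (eps/2) ltac:(lra))) as [N HN].
  exists N. intros n Hn. pose proof (ball_Cmod _ _ _ (HN n Hn)). simpl in H0. lra.
Qed.

Lemma Cmod_sub_sym (x y : C) : Cmod (x - y) = Cmod (y - x).
Proof. replace (x - y)%C with (- (y - x))%C by ring. apply Cmod_opp. Qed.

Lemma Cmod_tri3 (x y z : C) : Cmod (x - z) <= Cmod (x - y) + Cmod (y - z).
Proof. replace (x - z)%C with ((x - y) + (y - z))%C by ring. apply Cmod_triangle. Qed.

Lemma prodC_ext (f g : nat -> C) K : (forall j, (j < K)%nat -> f j = g j) -> prodC f K = prodC g K.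
Proof. induction K; intros H; simpl; auto. rewrite IHK by (intros; apply H; lia). rewrite H by lia. auto. Qed.

Lemma prodC_mul (f g : nat -> C) K : prodC (fun j => f j * g j)%C K = (prodC f K * prodC g K)%C.
Proof. induction K; simpl; [ring|]. rewrite IHK. ring. Qed.

Lemma prodC_tail (f : nat -> C) K0 K : (forall j, (K0 <= j)%nat -> f j = 1%C) -> (K0 <= K)%nat ->
  prodC f K = prodC f K0.
Proof.
  intros H HK. induction HK; auto. simpl. rewrite IHHK, H by lia. ring.
Qed.

Lemma prodC_nz (f : nat -> C) K : prodC f K <> 0%C -> forall j, (j < K)%nat -> f j <> 0%C.
Proof.
  induction K; intros H j Hj; [lia|]. simpl in H.
  destruct (Nat.eq_dec j K).
  - subst. intros E. apply H. rewrite E. ring.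
  - apply IHK; [|lia]. intros E. apply H. rewrite E. ring.
Qed.

Fixpoint sumN (f : nat -> R) (K : nat) : R :=
  match K with O => 0 | S k => sumN f k + f k end.

Lemma sumN_le (f g : nat -> R) K : (forall j, (j < K)%nat -> f j <= g j) -> sumN f K <= sumN g K.
Proof. induction K; intros H; simpl; [lra|]. pose proof (H K ltac:(lia)). pose proof (IHK ltac:(intros; apply H; lia)). lra. Qed.

Lemma sumN_scal (f : nat -> R) c K : sumN (fun j => c * f j) K = c * sumN f K.
Proof. induction K; simpl; [ring|]. rewrite IHK. ring. Qed.

Lemma sumN_ge0 (f : nat -> R) K : (forall j, (j < K)%nat -> 0 <= f j) -> 0 <= sumN f K.
Proof. intros H. apply Rle_trans with (sumN (fun _ => 0) K); [|apply sumN_le; auto].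
  clear H. induction K; simpl; lra. Qed.

Lemma sumN_geom (rho : R) K : 0 <= rho < 1 -> sumN (fun j => rho ^ j) K <= / (1 - rho).
Proof.
  intros Hr. assert (E : sumN (fun j => rho ^ j) K * (1 - rho) = 1 - rho ^ K).
  { induction K; simpl; [ring|]. rewrite Rmult_plus_distr_r, IHK. ring. }
  assert (0 <= rho ^ K) by (apply pow_le; lra).
  apply Rmult_le_reg_r with (1 - rho); [lra|]. rewrite E, Rinv_l; lra.
Qed.

Lemma prodC_bound (f : nat -> C) (s : nat -> R) K :
  (forall j, (j < K)%nat -> Cmod (f j - 1) <= exp (s j) - 1) ->
  Cmod (prodC f K - 1) <= exp (sumN s K) - 1.
Proof.
  induction K; intros H; simpl.
  - replace (RtoC 1 - RtoC 1)%C with (RtoC 0) by ring. rewrite Cmod_0, exp_0. lra.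
  - pose proof (IHK ltac:(intros; apply H; lia)) as IH.
    pose proof (H K ltac:(lia)) as HK.
    set (P := prodC f K) in *. set (z := f K) in *.
    replace (P * z - 1)%C with ((P - 1) * (z - 1) + (P - 1) + (z - 1))%C by ring.
    rewrite exp_plus.
    pose proof (Cmod_ge_0 (P - 1)). pose proof (Cmod_ge_0 (z - 1)).
    eapply Rle_trans; [apply Cmod_triangle|].
    eapply Rle_trans; [apply Rplus_le_compat_r, Cmod_triangle|].
    rewrite Cmod_mult.
    assert (Cmod (P - 1) * Cmod (z - 1) <= (exp (sumN s K) - 1) * (exp (s K) - 1))
      by (apply Rmult_le_compat; auto).
    nra.
Qed.

Definition GP (h : nat -> nat -> C) (K : nat) : C :=
  prodC (fun j0 => prodC (fun j1 => h j0 j1) K) K.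

Lemma GP_mul (f g : nat -> nat -> C) K : GP (fun a b => f a b * g a b)%C K = (GP f K * GP g K)%C.
Proof.
  unfold GP. rewrite <- prodC_mul. apply prodC_ext. intros. apply prodC_mul.
Qed.

Lemma GP_bound (h : nat -> nat -> C) K :
  Cmod (GP h K - 1) <= exp (sumN (fun j0 => sumN (fun j1 => Cmod (h j0 j1 - 1)) K) K) - 1.
Proof.
  apply prodC_bound. intros j0 _. apply prodC_bound. intros j1 _.
  pose proof (exp_ineq1_le (Cmod (h j0 j1 - 1))). lra.
Qed.

Lemma Cmod_Cpow (a : C) n : Cmod (Cpow a n) = Cmod a ^ n.
Proof. induction n; simpl; [apply Cmod_1|]. rewrite Cmod_mult, IHn. auto. Qed.
Definition gq (y a b : C) (j0 j1 : nat) : C := (1 - y * Cpow a j0 * Cpow b j1)%C.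
Definition indq (y a b : C) (p : nat -> nat -> bool) (j0 j1 : nat) : C :=
  if p j0 j1 then gq y a b j0 j1 else RtoC 1.
Definition rho (a b : C) : R := (1 + Rmax (Cmod a) (Cmod b)) / 2.
Definition Dq (a b : C) : R := / (1 - rho a b) * / (1 - rho a b).

Lemma GP_ext (f g : nat -> nat -> C) K :
  (forall j0 j1, (j0 < K)%nat -> (j1 < K)%nat -> f j0 j1 = g j0 j1) -> GP f K = GP g K.
Proof. intros H. unfold GP. apply prodC_ext. intros. apply prodC_ext. intros. auto. Qed.

Lemma sumN_ext (f g : nat -> R) K : (forall j, (j < K)%nat -> f j = g j) -> sumN f K = sumN g K.
Proof. induction K; intros H; simpl; auto. rewrite IHK by (intros; apply H; lia). rewrite H by lia. auto. Qed.

Lemma prodC_ones (f : nat -> C) K : (forall j, (j < K)%nat -> f j = RtoC 1) -> prodC f K = RtoC 1.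
Proof. induction K; intros H; simpl; auto. rewrite IHK by (intros; apply H; lia). rewrite H by lia. ring. Qed.

Lemma rho_facts (a b : C) : Cmod a < 1 -> Cmod b < 1 ->
  0 < rho a b < 1 /\ Cmod a <= rho a b * rho a b /\ Cmod b <= rho a b * rho a b.
Proof.
  intros Ha Hb. unfold rho.
  pose proof (Cmod_ge_0 a). pose proof (Cmod_ge_0 b).
  pose proof (Rmax_l (Cmod a) (Cmod b)). pose proof (Rmax_r (Cmod a) (Cmod b)).
  assert (Rmax (Cmod a) (Cmod b) < 1) by (apply Rmax_lub_lt; auto).
  set (m := Rmax (Cmod a) (Cmod b)) in *.
  split; [lra|]. split; nra.
Qed.

Lemma pow_le_one (x : R) n : 0 <= x <= 1 -> x ^ n <= 1.
Proof. intros H. rewrite <- (pow1 n). apply pow_incr. lra. Qed.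

Lemma term_bound (y a b : C) (j0 j1 k : nat) : Cmod a < 1 -> Cmod b < 1 -> (k <= j0 + j1)%nat ->
  Cmod (gq y a b j0 j1 - 1) <= Cmod y * rho a b ^ k * (rho a b ^ j0 * rho a b ^ j1).
Proof.
  intros Ha Hb Hk. destruct (rho_facts a b Ha Hb) as [Hr [Har Hbr]].
  set (r := rho a b) in *.
  unfold gq. replace (1 - y * Cpow a j0 * Cpow b j1 - 1)%C with (- (y * Cpow a j0 * Cpow b j1))%C by ring.
  rewrite Cmod_opp, !Cmod_mult, !Cmod_Cpow.
  pose proof (Cmod_ge_0 y). pose proof (Cmod_ge_0 a). pose proof (Cmod_ge_0 b).
  assert (E1 : Cmod a ^ j0 <= r ^ j0 * r ^ j0) by (rewrite <- Rpow_mult_distr; apply pow_incr; lra).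
  assert (E2 : Cmod b ^ j1 <= r ^ j1 * r ^ j1) by (rewrite <- Rpow_mult_distr; apply pow_incr; lra).
  assert (E3 : r ^ j0 * r ^ j1 <= r ^ k).
  { rewrite <- pow_add. replace (j0 + j1)%nat with (k + (j0 + j1 - k))%nat by lia.
    rewrite pow_add. pose proof (pow_le_one r (j0 + j1 - k) ltac:(lra)).
    pose proof (pow_le r k ltac:(lra)). nra. }
  pose proof (pow_le (Cmod a) j0 ltac:(lra)). pose proof (pow_le (Cmod b) j1 ltac:(lra)).
  pose proof (pow_le r j0 ltac:(lra)). pose proof (pow_le r j1 ltac:(lra)).
  pose proof (pow_le r k ltac:(lra)).
  assert (Cmod a ^ j0 * Cmod b ^ j1 <= (r ^ j0 * r ^ j0) * (r ^ j1 * r ^ j1))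
    by (apply Rmult_le_compat; auto; apply pow_le; auto).
  assert ((r ^ j0 * r ^ j0) * (r ^ j1 * r ^ j1) = (r ^ j0 * r ^ j1) * (r ^ j0 * r ^ j1)) by ring.
  assert ((r ^ j0 * r ^ j1) * (r ^ j0 * r ^ j1) <= r ^ k * (r ^ j0 * r ^ j1)).
  { apply Rmult_le_compat_r; auto. apply Rmult_le_pos; auto. }
  rewrite Rmult_assoc. rewrite (Rmult_assoc (Cmod y)). apply Rmult_le_compat_l; auto. nra.
Qed.

Lemma sum_bound (y a b : C) (q : nat -> nat -> bool) (k : nat) K :
  Cmod a < 1 -> Cmod b < 1 ->
  (forall j0 j1, q j0 j1 = true -> (k <= j0 + j1)%nat) ->
  sumN (fun j0 => sumN (fun j1 => Cmod (indq y a b q j0 j1 - 1)) K) K <=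
  Cmod y * rho a b ^ k * Dq a b.
Proof.
  intros Ha Hb Hq. destruct (rho_facts a b Ha Hb) as [Hr _].
  set (r := rho a b) in *. pose proof (Cmod_ge_0 y).
  assert (Hc : 0 <= Cmod y * r ^ k) by (apply Rmult_le_pos; auto; apply pow_le; lra).
  apply Rle_trans with (sumN (fun j0 => sumN (fun j1 => Cmod y * r ^ k * (r ^ j0 * r ^ j1)) K) K).
  - apply sumN_le; intros j0 _. apply sumN_le; intros j1 _.
    unfold indq. destruct (q j0 j1) eqn:E.
    + apply term_bound; auto.
    + replace (RtoC 1 - RtoC 1)%C with (RtoC 0) by ring. rewrite Cmod_0.
      apply Rmult_le_pos; auto. apply Rmult_le_pos; apply pow_le; lra.
  - set (G := sumN (fun j => r ^ j) K).
    assert (HG0 : 0 <= G) by (apply sumN_ge0; intros; apply pow_le; lra).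
    assert (HG : G <= / (1 - r)) by (apply sumN_geom; lra).
    rewrite (sumN_ext (fun j0 => sumN (fun j1 => Cmod y * r ^ k * (r ^ j0 * r ^ j1)) K)
                      (fun j0 => (Cmod y * r ^ k * G) * r ^ j0)).
    + rewrite sumN_scal. change (sumN (pow r) K) with G. unfold Dq. fold r.
      assert (0 <= / (1 - r)) by (apply Rlt_le, Rinv_0_lt_compat; lra).
      rewrite Rmult_assoc. apply Rmult_le_compat_l; auto.
      apply Rmult_le_compat; auto.
    + intros j0 _. rewrite (sumN_ext _ (fun j1 => (Cmod y * r ^ k * r ^ j0) * r ^ j1)).
      * rewrite sumN_scal. change (sumN (pow r) K) with G. ring.
      * intros; ring.
Qed.
Definition Mq (y a b : C) : R := exp (Cmod y * Dq a b).
Definition dq (y a b : C) (k : nat) : R := Mq y a b * (exp (Cmod y * rho a b ^ k * Dq a b) - 1).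

Lemma Dq_pos (a b : C) : Cmod a < 1 -> Cmod b < 1 -> 0 < Dq a b.
Proof.
  intros Ha Hb. destruct (rho_facts a b Ha Hb) as [Hr _]. unfold Dq.
  assert (0 < / (1 - rho a b)) by (apply Rinv_0_lt_compat; lra). nra.
Qed.

Lemma GP_diff (y a b : C) (p p' : nat -> nat -> bool) (k K : nat) :
  Cmod a < 1 -> Cmod b < 1 ->
  (forall j0 j1, p j0 j1 = true -> p' j0 j1 = true) ->
  (forall j0 j1, (j0 < k)%nat -> (j1 < k)%nat -> p j0 j1 = true) ->
  Cmod (GP (indq y a b p') K - GP (indq y a b p) K) <= dq y a b k.
Proof.
  intros Ha Hb Hpp Hk.
  set (q := fun j0 j1 => (p' j0 j1 && negb (p j0 j1))%bool).
  assert (E : GP (indq y a b p') K = (GP (indq y a b p) K * GP (indq y a b q) K)%C).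
  { rewrite <- GP_mul. apply GP_ext. intros j0 j1 _ _. unfold indq, q.
    destruct (p j0 j1) eqn:E1.
    - rewrite (Hpp _ _ E1). simpl. ring.
    - simpl. destruct (p' j0 j1); simpl; ring. }
  rewrite E.
  replace (GP (indq y a b p) K * GP (indq y a b q) K - GP (indq y a b p) K)%C
    with (GP (indq y a b p) K * (GP (indq y a b q) K - 1))%C by ring.
  rewrite Cmod_mult. unfold dq.
  pose proof (GP_bound (indq y a b p) K) as B1.
  pose proof (GP_bound (indq y a b q) K) as B2.
  pose proof (sum_bound y a b p 0 K Ha Hb ltac:(intros; lia)) as S1.
  pose proof (sum_bound y a b q k K Ha Hb) as S2.
  assert (S2' : sumN (fun j0 => sumN (fun j1 => Cmod (indq y a b q j0 j1 - 1)) K) K <=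
                Cmod y * rho a b ^ k * Dq a b).
  { apply S2. intros j0 j1 Hq. unfold q in Hq. apply andb_prop in Hq. destruct Hq as [_ Hq].
    destruct (Nat.lt_ge_cases j0 k), (Nat.lt_ge_cases j1 k); try lia.
    rewrite Hk in Hq by auto. discriminate. }
  simpl pow in S1. rewrite Rmult_1_r in S1.
  assert (C1 : Cmod (GP (indq y a b p) K) <= Mq y a b).
  { unfold Mq. replace (GP (indq y a b p) K) with ((GP (indq y a b p) K - 1) + 1)%C by ring.
    eapply Rle_trans; [apply Cmod_triangle|]. rewrite Cmod_1.
    assert (exp (sumN (fun j0 => sumN (fun j1 => Cmod (indq y a b p j0 j1 - 1)) K) K) <= exp (Cmod y * Dq a b)).
    { destruct S1 as [S1|S1]; [left; apply exp_increasing; auto| rewrite S1; lra]. }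
    lra. }
  assert (C2 : Cmod (GP (indq y a b q) K - 1) <= exp (Cmod y * rho a b ^ k * Dq a b) - 1).
  { assert (exp (sumN (fun j0 => sumN (fun j1 => Cmod (indq y a b q j0 j1 - 1)) K) K) <= exp (Cmod y * rho a b ^ k * Dq a b)).
    { destruct S2' as [S|S]; [left; apply exp_increasing; auto| rewrite S; lra]. }
    lra. }
  apply Rmult_le_compat; auto using Cmod_ge_0.
Qed.

Lemma dq_small (y a b : C) : Cmod a < 1 -> Cmod b < 1 ->
  forall eta, 0 < eta -> exists k0, forall k, (k0 <= k)%nat -> dq y a b k < eta.
Proof.
  intros Ha Hb eta Heta.
  destruct (rho_facts a b Ha Hb) as [Hr _]. pose proof (Dq_pos a b Ha Hb) as HD.
  assert (HM : 0 < Mq y a b) by apply exp_pos.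
  set (t := ln (1 + eta / Mq y a b)).
  assert (Ht : 0 < t).
  { unfold t. rewrite <- ln_1. apply ln_increasing; [lra|].
    assert (0 < eta / Mq y a b) by (apply Rdiv_lt_0_compat; auto). lra. }
  pose proof (Cmod_ge_0 y).
  destruct (pow_lt_1_zero (rho a b) ltac:(rewrite Rabs_pos_eq; lra) (t / (Cmod y * Dq a b + 1))
             ltac:(apply Rdiv_lt_0_compat; nra)) as [k0 Hk0].
  exists k0. intros k Hk. specialize (Hk0 k Hk).
  rewrite Rabs_pos_eq in Hk0 by (apply pow_le; lra).
  unfold dq.
  assert (Cmod y * rho a b ^ k * Dq a b < t).
  { apply Rmult_lt_compat_r with (r := Cmod y * Dq a b + 1) in Hk0; [|nra].
    unfold Rdiv in Hk0. rewrite Rmult_assoc, Rinv_l in Hk0 by nra.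
    pose proof (pow_le (rho a b) k ltac:(lra)). nra. }
  assert (exp (Cmod y * rho a b ^ k * Dq a b) < 1 + eta / Mq y a b).
  { rewrite <- (exp_ln (1 + eta / Mq y a b)).
    - apply exp_increasing. auto.
    - assert (0 < eta / Mq y a b) by (apply Rdiv_lt_0_compat; auto). lra. }
  apply Rmult_lt_compat_l with (r := Mq y a b) in H1; auto.
  assert (Mq y a b * (1 + eta / Mq y a b) = Mq y a b + eta) by (field; lra).
  rewrite H2 in H1. lra.
Qed.

Definition boxp (m : nat) (j0 j1 : nat) : bool := andb (Nat.ltb j0 m) (Nat.ltb j1 m).

Lemma part_GP (y a b : C) N : qpoch_part y a b N = GP (indq y a b (fun _ _ => true)) N.
Proof. reflexivity. Qed.

Lemma GP_box (y a b : C) m n : (m <= n)%nat ->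
  GP (indq y a b (boxp m)) n = GP (indq y a b (fun _ _ => true)) m.
Proof.
  intros Hmn. unfold GP.
  rewrite (prodC_tail _ m n); auto.
  - apply prodC_ext. intros j0 Hj0. rewrite (prodC_tail _ m n); auto.
    + apply prodC_ext. intros j1 Hj1. unfold indq, boxp.
      replace (j0 <? m)%nat with true by (symmetry; apply Nat.ltb_lt; auto).
      replace (j1 <? m)%nat with true by (symmetry; apply Nat.ltb_lt; auto). reflexivity.
    + intros j1 Hj1. unfold indq, boxp.
      replace (j1 <? m)%nat with false by (symmetry; apply Nat.ltb_ge; auto).
      rewrite Bool.andb_false_r. reflexivity.
  - intros j0 Hj0. apply prodC_ones. intros j1 _. unfold indq, boxp.
    replace (j0 <? m)%nat with false by (symmetry; apply Nat.ltb_ge; auto). reflexivity.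
Qed.

Lemma qlim_main (y a b : C) : Cmod a < 1 -> Cmod b < 1 ->
  filterlim (qpoch_part y a b) eventually (locally (qpoch_lim y a b)) /\
  forall eps, 0 < eps -> exists k, forall K (p : nat -> nat -> bool), (k <= K)%nat ->
    (forall j0 j1, (j0 < k)%nat -> (j1 < k)%nat -> p j0 j1 = true) ->
    Cmod (GP (indq y a b p) K - qpoch_lim y a b) < eps.
Proof.
  intros Ha Hb.
  assert (Hex : exists l, filterlim (qpoch_part y a b) eventually (locally l)).
  { apply cauchy_lim. intros eps Heps.
    destruct (dq_small y a b Ha Hb eps Heps) as [k0 Hk0].
    exists k0. intros m n Hm Hn.
    assert (Gen : forall m n, (k0 <= m)%nat -> (m <= n)%nat ->
              Cmod (qpoch_part y a b n - qpoch_part y a b m) < eps).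
    { clear m n Hm Hn. intros m n Hm Hmn. rewrite !part_GP, <- (GP_box y a b m n Hmn).
      eapply Rle_lt_trans; [apply (GP_diff y a b (boxp m) (fun _ _ => true) m n Ha Hb)|].
      - auto.
      - intros j0 j1 H0 H1. unfold boxp. apply andb_true_intro; split; apply Nat.ltb_lt; auto.
      - apply Hk0; auto. }
    destruct (Nat.le_ge_cases m n).
    - rewrite Cmod_sub_sym. apply Gen; auto.
    - apply Gen; auto. }
  assert (Hl : filterlim (qpoch_part y a b) eventually (locally (qpoch_lim y a b))).
  { unfold qpoch_lim. apply (epsilon_spec (inhabits (RtoC 0))
      (fun L => filterlim (qpoch_part y a b) eventually (locally L))). exact Hex. }
  split; auto.
  intros eps Heps.
  destruct (dq_small y a b Ha Hb (eps/2) ltac:(lra)) as [k0 Hk0].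
  destruct (lim_conv _ _ Hl (eps/2) ltac:(lra)) as [N0 HN0].
  exists (Nat.max k0 N0). intros K p HK Hp.
  eapply Rle_lt_trans; [apply (Cmod_tri3 _ (qpoch_part y a b K))|].
  assert (Cmod (GP (indq y a b p) K - qpoch_part y a b K) <= dq y a b (Nat.max k0 N0)).
  { rewrite part_GP, Cmod_sub_sym. apply GP_diff; auto. }
  pose proof (Hk0 (Nat.max k0 N0) ltac:(lia)).
  pose proof (HN0 K ltac:(lia)). lra.
Qed.
Lemma C_eq (a b : C) : fst a = fst b -> snd a = snd b -> a = b.
Proof. destruct a, b; simpl; intros; subst; auto. Qed.

Lemma e2pi_add (a b : C) : e2pi (a + b) = (e2pi a * e2pi b)%C.
Proof.
  destruct a as [a1 a2], b as [b1 b2]. unfold e2pi, Cmult, Cplus, Re, Im; simpl.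
  replace (2 * PI * (a1 + b1)) with (2 * PI * a1 + 2 * PI * b1) by ring.
  replace (-2 * PI * (a2 + b2)) with (-2 * PI * a2 + -2 * PI * b2) by ring.
  rewrite cos_plus, sin_plus, exp_plus. apply C_eq; simpl; ring.
Qed.

Lemma e2pi_0 : e2pi (RtoC 0) = RtoC 1.
Proof.
  unfold e2pi, RtoC, Re, Im; simpl. rewrite !Rmult_0_r, exp_0, cos_0, sin_0.
  apply C_eq; simpl; ring.
Qed.

Lemma e2pi_nz (t : C) : e2pi t <> RtoC 0.
Proof.
  intros E. assert (H := e2pi_add t (- t)). replace (t + - t)%C with (RtoC 0) in H by ring.
  rewrite E, e2pi_0 in H. replace (RtoC 0 * e2pi (- t))%C with (RtoC 0) in H by ring.
  apply (f_equal fst) in H. simpl in H. lra.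
Qed.

Lemma Cinv_e2pi (t : C) : Cinv (e2pi t) = e2pi (- t).
Proof.
  assert (H := e2pi_add t (- t)). replace (t + - t)%C with (RtoC 0) in H by ring.
  rewrite e2pi_0 in H. pose proof (e2pi_nz t).
  replace (e2pi (-t)) with (/ e2pi t * (e2pi t * e2pi (-t)))%C by (field; auto).
  rewrite <- H. ring.
Qed.

Lemma Cmod_e2pi (t : C) : Cmod (e2pi t) = exp (-2 * PI * Im t).
Proof.
  unfold e2pi, Cmod; cbn [fst snd].
  replace ((exp (-2 * PI * Im t) * cos (2 * PI * Re t)) ^ 2 +
           (exp (-2 * PI * Im t) * sin (2 * PI * Re t)) ^ 2)
     with (exp (-2 * PI * Im t) ^ 2 * ((sin (2 * PI * Re t))² + (cos (2 * PI * Re t))²))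
     by (unfold Rsqr; ring).
  rewrite sin2_cos2, Rmult_1_r. apply sqrt_pow2. left; apply exp_pos.
Qed.

Lemma Cpow_e2pi (t : C) n : Cpow (e2pi t) n = e2pi (RtoC (INR n) * t).
Proof.
  induction n.
  - simpl. replace (RtoC 0 * t)%C with (RtoC 0) by ring. rewrite e2pi_0. auto.
  - simpl Cpow. rewrite IHn, <- e2pi_add. f_equal. rewrite S_INR, RtoC_plus. ring.
Qed.

Definition Ew (w : C * C) (v : Z * Z) : C := e2pi (crossCZ w v).

Lemma crossCZ_add (w : C * C) (a b : Z * Z) : crossCZ w (vadd a b) = (crossCZ w a + crossCZ w b)%C.
Proof. unfold crossCZ, vadd; simpl. rewrite !plus_IZR, !RtoC_plus. ring. Qed.
Lemma crossCZ_neg (w : C * C) (a : Z * Z) : crossCZ w (vneg a) = (- crossCZ w a)%C.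
Proof. unfold crossCZ, vneg; simpl. rewrite !opp_IZR, !RtoC_opp. ring. Qed.
Lemma crossCZ_0 (w : C * C) : crossCZ w (0%Z, 0%Z) = RtoC 0.
Proof. unfold crossCZ; simpl. ring. Qed.
Definition zmul (z : Z) (a : Z * Z) : Z * Z := (z * fst a, z * snd a)%Z.
Lemma crossCZ_mul (w : C * C) z (a : Z * Z) : crossCZ w (zmul z a) = (RtoC (IZR z) * crossCZ w a)%C.
Proof. unfold crossCZ, zmul; simpl. rewrite !mult_IZR, !RtoC_mult. ring. Qed.

Lemma Ew_add w a b : Ew w (vadd a b) = (Ew w a * Ew w b)%C.
Proof. unfold Ew. rewrite crossCZ_add. apply e2pi_add. Qed.
Lemma Ew_neg w a : Ew w (vneg a) = Cinv (Ew w a).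
Proof. unfold Ew. rewrite crossCZ_neg, Cinv_e2pi. auto. Qed.
Lemma Ew_0 w : Ew w (0%Z, 0%Z) = RtoC 1.
Proof. unfold Ew. rewrite crossCZ_0. apply e2pi_0. Qed.
Lemma Ew_pow w a n : Cpow (Ew w a) n = Ew w (zmul (Z.of_nat n) a).
Proof. unfold Ew. rewrite Cpow_e2pi, crossCZ_mul, <- INR_IZR_INZ. auto. Qed.
Lemma Cmod_Ew w a : Cmod (Ew w a) = exp (-2 * PI * ell w a).
Proof. unfold Ew, ell. apply Cmod_e2pi. Qed.
Lemma ell_neg w a : ell w (vneg a) = - ell w a.
Proof. unfold ell. rewrite crossCZ_neg. unfold Im, Copp; simpl. auto. Qed.

Definition conePt (c d0 d1 : Z * Z) (j0 j1 : nat) : Z * Z :=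
  vadd c (vadd (zmul (Z.of_nat j0) d0) (zmul (Z.of_nat j1) d1)).

Lemma gq_cone (w : C * C) (x : C) (c d0 d1 : Z * Z) j0 j1 :
  gq (x * Ew w c) (Ew w d0) (Ew w d1) j0 j1 = (1 - x * Ew w (conePt c d0 d1 j0 j1))%C.
Proof. unfold gq, conePt. rewrite !Ew_add, !Ew_pow. ring. Qed.
Fixpoint prodL {A : Type} (f : A -> C) (l : list A) : C :=
  match l with nil => RtoC 1 | a :: l' => (f a * prodL f l')%C end.

Lemma prodL_app {A} (f : A -> C) l1 l2 : prodL f (l1 ++ l2) = (prodL f l1 * prodL f l2)%C.
Proof. induction l1; simpl; [ring|]. rewrite IHl1. ring. Qed.

Lemma prodL_ext {A} (f g : A -> C) l : (forall x, In x l -> f x = g x) -> prodL f l = prodL g l.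
Proof. induction l; intros H; simpl; auto. rewrite H by (left; auto). rewrite IHl; auto. intros; apply H; right; auto. Qed.

Lemma prodC_seq (f : nat -> C) K : prodC f K = prodL f (seq 0 K).
Proof.
  induction K; [reflexivity|]. cbn [prodC]. rewrite seq_S, prodL_app, IHK. cbn [prodL]. rewrite Nat.add_0_l. ring.
Qed.

Lemma prodL_flat {A B} (f : B -> C) (g : A -> list B) l :
  prodL f (flat_map g l) = prodL (fun a => prodL f (g a)) l.
Proof. induction l; simpl; auto. rewrite prodL_app, IHl. auto. Qed.

Lemma prodL_map {A B} (f : B -> C) (g : A -> B) l : prodL f (map g l) = prodL (fun a => f (g a)) l.
Proof. induction l; simpl; auto. rewrite IHl; auto. Qed.

Lemma prodL_filter {A} (f : A -> C) (P : A -> bool) l :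
  prodL f (filter P l) = prodL (fun a => if P a then f a else RtoC 1) l.
Proof. induction l; simpl; auto. destruct (P a); simpl; rewrite IHl; ring. Qed.

Lemma prodL_perm {A} (f : A -> C) l l' : Permutation l l' -> prodL f l = prodL f l'.
Proof. intros H; induction H; simpl; auto; try ring. rewrite IHPermutation; auto. congruence. Qed.

Lemma prodL_mul {A} (f g : A -> C) l : prodL (fun a => f a * g a)%C l = (prodL f l * prodL g l)%C.
Proof. induction l; simpl; [ring|]. rewrite IHl. ring. Qed.

Lemma prodL_nz {A} (f : A -> C) l : prodL f l <> RtoC 0 -> forall x, In x l -> f x <> RtoC 0.
Proof.
  induction l; simpl; intros H x Hx; [contradiction|].
  destruct Hx as [E|Hx].
  - subst. intros E. apply H. rewrite E. ring.
  - apply IHl; auto. intros E. apply H. rewrite E. ring.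
Qed.

Lemma prodL_nz_intro {A} (f : A -> C) l : (forall x, In x l -> f x <> RtoC 0) -> prodL f l <> RtoC 0.
Proof.
  induction l; simpl; intros H.
  - intros E; apply (f_equal fst) in E; simpl in E; lra.
  - apply Cmult_neq_0; [apply H; auto|]. apply IHl; auto.
Qed.

Lemma prodL_inv {A} (f : A -> C) l : (forall x, In x l -> f x <> RtoC 0) ->
  Cinv (prodL f l) = prodL (fun a => Cinv (f a)) l.
Proof.
  induction l; simpl; intros H.
  - apply C_eq; simpl; field.
  - rewrite <- IHl by auto.
    assert (prodL f l <> RtoC 0) by (apply prodL_nz_intro; intros; apply H; auto).
    pose proof (H a (or_introl eq_refl)). field. auto.
Qed.

Lemma prodL_swap {A} (F : nat -> A -> C) l m :
  prodC (fun i => prodL (F i) l) m = prodL (fun a => prodC (fun i => F i a) m) l.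
Proof.
  induction m; simpl.
  - induction l; simpl; auto. rewrite <- IHl. ring.
  - rewrite IHm. rewrite <- prodL_mul. auto.
Qed.

Lemma prodL_ones {A} (l : list A) : prodL (fun _ => RtoC 1) l = RtoC 1.
Proof. induction l; simpl; auto. rewrite IHl. ring. Qed.

Lemma prodL_single {A} (f : A -> C) l (x0 : A) : NoDup l -> In x0 l ->
  (forall x, In x l -> x <> x0 -> f x = RtoC 1) -> prodL f l = f x0.
Proof.
  induction l; simpl; intros Hnd Hin H; [contradiction|].
  inversion Hnd; subst. destruct Hin as [E|Hin].
  - subst. rewrite (prodL_ext _ (fun _ => RtoC 1)).
    + rewrite prodL_ones. ring.
    + intros x Hx. apply H; auto. intros E; subst; contradiction.
  - rewrite IHl; auto. rewrite H; auto. ring. intros E; subst; contradiction.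
Qed.

Lemma NoDup_list_prod {A B} (l1 : list A) (l2 : list B) :
  NoDup l1 -> NoDup l2 -> NoDup (list_prod l1 l2).
Proof.
  induction l1; intros H1 H2; simpl; [constructor|].
  inversion H1; subst. apply NoDup_app.
  - apply FinFun.Injective_map_NoDup; auto. intros x y E; injection E; auto.
  - apply IHl1; auto.
  - intros [p q] Hp Hq. apply in_map_iff in Hp. destruct Hp as [b [E _]]. injection E; intros; subst.
    apply in_prod_iff in Hq. tauto.
Qed.

Definition gridL (K : nat) : list (nat * nat) := list_prod (seq 0 K) (seq 0 K).

Lemma prodL_prod {A B} (h : A -> B -> C) l1 l2 :
  prodL (fun p => h (fst p) (snd p)) (list_prod l1 l2) = prodL (fun a => prodL (fun b => h a b) l2) l1.
Proof.
  induction l1; simpl; auto. rewrite prodL_app, IHl1, prodL_map. simpl. auto.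
Qed.

Lemma GP_grid (h : nat -> nat -> C) K : GP h K = prodL (fun p => h (fst p) (snd p)) (gridL K).
Proof.
  unfold GP, gridL. rewrite prodL_prod, prodC_seq. apply prodL_ext. intros j0 _.
  rewrite prodC_seq. auto.
Qed.

Definition zr (R : nat) : list Z := map (fun k => (Z.of_nat k - Z.of_nat R)%Z) (seq 0 (2 * R + 1)).
Definition boxL (R : nat) : list (Z * Z) := list_prod (zr R) (zr R).
Definition inBox (R : nat) (v : Z * Z) : bool :=
  andb (Z.leb (Z.abs (fst v)) (Z.of_nat R)) (Z.leb (Z.abs (snd v)) (Z.of_nat R)).

Lemma in_zr R z : In z (zr R) <-> (Z.abs z <= Z.of_nat R)%Z.
Proof.
  unfold zr. rewrite in_map_iff. split.
  - intros [k [E Hk]]. apply in_seq in Hk. lia.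
  - intros H. exists (Z.to_nat (z + Z.of_nat R)). split; [lia|]. apply in_seq. lia.
Qed.

Lemma in_boxL R v : In v (boxL R) <-> inBox R v = true.
Proof.
  destruct v as [v1 v2]. unfold boxL, inBox. rewrite in_prod_iff, !in_zr. simpl.
  rewrite Bool.andb_true_iff, !Z.leb_le. tauto.
Qed.

Lemma NoDup_boxL R : NoDup (boxL R).
Proof.
  apply NoDup_list_prod; unfold zr; apply FinFun.Injective_map_NoDup; try apply seq_NoDup;
  intros a b E; lia.
Qed.

Lemma list_bound {A} (l : list A) (g : A -> nat) : exists K, forall x, In x l -> (g x < K)%nat.
Proof.
  induction l as [|a l [K HK]]; [exists O; intros x []|].
  exists (Nat.max K (S (g a))). intros x [E|Hx]; [subst; lia|]. specialize (HK x Hx). lia.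
Qed.
Definition conePt' (c d0 d1 : Z * Z) (p : nat * nat) : Z * Z := conePt c d0 d1 (fst p) (snd p).

Lemma C_eq_Z (a b : Z * Z) : fst a = fst b -> snd a = snd b -> a = b.
Proof. destruct a, b; simpl; intros; subst; auto. Qed.

Lemma cone_coord0 c d0 d1 j0 j1 :
  crossZ (vsub (conePt c d0 d1 j0 j1) c) d1 = (Z.of_nat j0 * crossZ d0 d1)%Z.
Proof. unfold crossZ, vsub, conePt, vadd, vneg, zmul; simpl. ring. Qed.
Lemma cone_coord1 c d0 d1 j0 j1 :
  crossZ d0 (vsub (conePt c d0 d1 j0 j1) c) = (Z.of_nat j1 * crossZ d0 d1)%Z.
Proof. unfold crossZ, vsub, conePt, vadd, vneg, zmul; simpl. ring. Qed.

Lemma cone_inv c d0 d1 v : (crossZ d0 d1 * crossZ d0 d1 = 1)%Z ->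
  (0 <= crossZ d0 d1 * crossZ (vsub v c) d1)%Z -> (0 <= crossZ d0 d1 * crossZ d0 (vsub v c))%Z ->
  conePt c d0 d1 (Z.to_nat (crossZ d0 d1 * crossZ (vsub v c) d1))
                 (Z.to_nat (crossZ d0 d1 * crossZ d0 (vsub v c))) = v.
Proof.
  intros Hd H0 H1.
  set (W := vsub v c).
  assert (Cr1 : (crossZ W d1 * fst d0 + crossZ d0 W * fst d1 = crossZ d0 d1 * fst W)%Z)
    by (unfold crossZ; ring).
  assert (Cr2 : (crossZ W d1 * snd d0 + crossZ d0 W * snd d1 = crossZ d0 d1 * snd W)%Z)
    by (unfold crossZ; ring).
  fold W in H0, H1 |- *.
  unfold conePt, vadd, zmul. rewrite !Z2Nat.id by auto. simpl.
  set (dl := crossZ d0 d1) in *. set (A := crossZ W d1) in *. set (B := crossZ d0 W) in *.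
  destruct v as [v1 v2]. destruct c as [c1 c2]. unfold W, vsub, vadd, vneg in Cr1, Cr2; simpl in *.
  apply C_eq_Z; simpl.
  - replace (dl * A * fst d0 + dl * B * fst d1)%Z with (dl * (A * fst d0 + B * fst d1))%Z by ring.
    rewrite Cr1. replace (dl * (dl * (v1 + - c1)))%Z with ((dl * dl) * (v1 + - c1))%Z by ring.
    rewrite Hd. ring.
  - replace (dl * A * snd d0 + dl * B * snd d1)%Z with (dl * (A * snd d0 + B * snd d1))%Z by ring.
    rewrite Cr2. replace (dl * (dl * (v2 + - c2)))%Z with ((dl * dl) * (v2 + - c2))%Z by ring.
    rewrite Hd. ring.
Qed.
Lemma cone_inj c d0 d1 : (crossZ d0 d1 * crossZ d0 d1 = 1)%Z -> FinFun.Injective (conePt' c d0 d1).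
Proof.
  intros Hd [a0 a1] [b0 b1] E. unfold conePt' in E; simpl in E.
  pose proof (f_equal (fun v => crossZ (vsub v c) d1) E) as E0.
  pose proof (f_equal (fun v => crossZ d0 (vsub v c)) E) as E1.
  simpl in E0, E1. rewrite !cone_coord0 in E0. rewrite !cone_coord1 in E1.
  assert (crossZ d0 d1 <> 0%Z) by (intros Z0; rewrite Z0 in Hd; lia).
  apply Z.mul_cancel_r in E0; auto. apply Z.mul_cancel_r in E1; auto.
  f_equal; lia.
Qed.

Lemma cone_reindex (w : C * C) (x : C) (c d0 d1 : Z * Z) (R K : nat) :
  (crossZ d0 d1 * crossZ d0 d1 = 1)%Z ->
  (forall v, In v (boxL R) -> inCone c d0 d1 v = true ->
     (Z.to_nat (crossZ d0 d1 * crossZ (vsub v c) d1) < K)%nat /\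
     (Z.to_nat (crossZ d0 d1 * crossZ d0 (vsub v c)) < K)%nat) ->
  GP (indq (x * Ew w c) (Ew w d0) (Ew w d1) (fun j0 j1 => inBox R (conePt c d0 d1 j0 j1))) K
  = prodL (fun v => if inCone c d0 d1 v then (1 - x * Ew w v)%C else RtoC 1) (boxL R).
Proof.
  intros Hd HK.
  set (F := fun v => (1 - x * Ew w v)%C).
  rewrite GP_grid.
  rewrite (prodL_ext _ (fun p => if inBox R (conePt' c d0 d1 p) then F (conePt' c d0 d1 p) else RtoC 1)).
  2:{ intros [j0 j1] _. unfold indq, conePt', F; simpl. rewrite gq_cone. auto. }
  rewrite <- (prodL_filter (fun p => F (conePt' c d0 d1 p))).
  rewrite <- (prodL_map F (conePt' c d0 d1)).
  rewrite <- (prodL_filter F (inCone c d0 d1)).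
  apply prodL_perm. apply NoDup_Permutation.
  - apply FinFun.Injective_map_NoDup; [apply cone_inj; auto|].
    apply NoDup_filter. apply NoDup_list_prod; apply seq_NoDup.
  - apply NoDup_filter, NoDup_boxL.
  - intros v. rewrite in_map_iff, filter_In. split.
    + intros [[j0 j1] [E Hp]]. rewrite filter_In in Hp. destruct Hp as [_ Hb].
      rewrite <- E. split; [apply in_boxL; auto|].
      unfold inCone, conePt'; simpl. rewrite cone_coord0, cone_coord1.
      assert (Hm : forall m : Z, (crossZ d0 d1 * (m * crossZ d0 d1) = m)%Z).
      { intros m. replace (crossZ d0 d1 * (m * crossZ d0 d1))%Z with (m * (crossZ d0 d1 * crossZ d0 d1))%Z by ring.
        rewrite Hd. ring. }
      rewrite !Hm. apply andb_true_intro; split; apply Z.leb_le; lia.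
    + intros [Hv Hc]. pose proof (HK v Hv Hc) as [K0 K1].
      unfold inCone in Hc. apply andb_prop in Hc. destruct Hc as [C0 C1].
      apply Z.leb_le in C0. apply Z.leb_le in C1.
      exists (Z.to_nat (crossZ d0 d1 * crossZ (vsub v c) d1), Z.to_nat (crossZ d0 d1 * crossZ d0 (vsub v c))).
      assert (E : conePt' c d0 d1 (Z.to_nat (crossZ d0 d1 * crossZ (vsub v c) d1),
                 Z.to_nat (crossZ d0 d1 * crossZ d0 (vsub v c))) = v)
        by (unfold conePt'; simpl; apply cone_inv; auto).
      split; auto. rewrite filter_In. split.
      * unfold gridL. apply in_prod_iff. split; apply in_seq; lia.
      * rewrite E. apply in_boxL; auto.
Qed.

Lemma cone_K (c d0 d1 : Z * Z) (R : nat) : exists K, forall v, In v (boxL R) -> inCone c d0 d1 v = true ->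
     (Z.to_nat (crossZ d0 d1 * crossZ (vsub v c) d1) < K)%nat /\
     (Z.to_nat (crossZ d0 d1 * crossZ d0 (vsub v c)) < K)%nat.
Proof.
  destruct (list_bound (boxL R) (fun v => Z.to_nat (crossZ d0 d1 * crossZ (vsub v c) d1) +
                                          Z.to_nat (crossZ d0 d1 * crossZ d0 (vsub v c)))%nat) as [K HK].
  exists K. intros v Hv _. specialize (HK v Hv). simpl in HK. lia.
Qed.

Lemma cone_R (c d0 d1 : Z * Z) (k : nat) : exists R0, forall R, (R0 <= R)%nat ->
  forall j0 j1, (j0 < k)%nat -> (j1 < k)%nat -> inBox R (conePt c d0 d1 j0 j1) = true.
Proof.
  destruct (list_bound (gridL k) (fun p => Z.to_nat (Z.abs (fst (conePt' c d0 d1 p))) +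
                                           Z.to_nat (Z.abs (snd (conePt' c d0 d1 p))))%nat) as [R0 HR].
  exists R0. intros R HR0 j0 j1 H0 H1.
  assert (Hin : In (j0, j1) (gridL k)) by (unfold gridL; apply in_prod_iff; split; apply in_seq; lia).
  specialize (HR _ Hin). unfold conePt' in HR; cbn [fst snd] in HR.
  set (v := conePt c d0 d1 j0 j1) in *.
  unfold inBox. apply andb_true_intro; split; apply Z.leb_le; lia.
Qed.
Definition convC (s : nat -> C) (l : C) : Prop :=
  forall eps, 0 < eps -> exists N, forall R, (N <= R)%nat -> Cmod (s R - l) < eps.

Lemma convC_mult s t l m : convC s l -> convC t m -> convC (fun R => s R * t R)%C (l * m)%C.
Proof.
  intros Hs Ht eps Heps.
  pose proof (Cmod_ge_0 l). pose proof (Cmod_ge_0 m).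
  set (e1 := Rmin 1 (eps / (2 * (Cmod m + 1)))).
  set (e2 := eps / (2 * (Cmod l + 2))).
  assert (He1 : 0 < e1) by (unfold e1; apply Rmin_pos; [lra| apply Rdiv_lt_0_compat; lra]).
  assert (He2 : 0 < e2) by (unfold e2; apply Rdiv_lt_0_compat; lra).
  destruct (Hs e1 He1) as [N1 HN1]. destruct (Ht e2 He2) as [N2 HN2].
  exists (Nat.max N1 N2). intros R HR.
  specialize (HN1 R ltac:(lia)). specialize (HN2 R ltac:(lia)).
  replace (s R * t R - l * m)%C with (s R * (t R - m) + m * (s R - l))%C by ring.
  eapply Rle_lt_trans; [apply Cmod_triangle|]. rewrite !Cmod_mult.
  assert (Hs1 : Cmod (s R) <= Cmod l + 1).
  { replace (s R) with ((s R - l) + l)%C by ring. eapply Rle_trans; [apply Cmod_triangle|].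
    assert (e1 <= 1) by apply Rmin_l. lra. }
  assert (A1 : Cmod (s R) * Cmod (t R - m) <= (Cmod l + 1) * e2).
  { apply Rmult_le_compat; auto using Cmod_ge_0. lra. }
  assert (A2 : Cmod m * Cmod (s R - l) <= Cmod m * e1).
  { apply Rmult_le_compat_l; auto. lra. }
  assert ((Cmod l + 1) * e2 < eps / 2).
  { unfold e2. apply Rmult_lt_reg_r with (2 * (Cmod l + 2)); [lra|].
    field_simplify; lra. }
  assert (Cmod m * e1 < eps / 2).
  { assert (e1 <= eps / (2 * (Cmod m + 1))) by apply Rmin_r.
    apply Rle_lt_trans with (Cmod m * (eps / (2 * (Cmod m + 1)))).
    - apply Rmult_le_compat_l; auto.
    - apply Rmult_lt_reg_r with (2 * (Cmod m + 1)); [lra|]. field_simplify; lra. }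
  lra.
Qed.

Lemma convC_inv s l : convC s l -> l <> RtoC 0 -> convC (fun R => Cinv (s R)) (Cinv l).
Proof.
  intros Hs Hl eps Heps.
  assert (Hml : 0 < Cmod l) by (apply Cmod_gt_0; auto).
  set (e := Rmin (Cmod l / 2) (eps * (Cmod l * Cmod l) / 2)).
  assert (He : 0 < e).
  { unfold e. apply Rmin_pos; [lra|]. assert (0 < Cmod l * Cmod l) by nra. nra. }
  destruct (Hs e He) as [N HN]. exists N. intros R HR. specialize (HN R HR).
  assert (Hs2 : Cmod l / 2 <= Cmod (s R)).
  { assert (e <= Cmod l / 2) by apply Rmin_l.
    replace l with ((l - s R) + s R)%C in Hml |- * by ring.
    pose proof (Cmod_triangle (l - s R) (s R)). rewrite Cmod_sub_sym in H0.
    replace (l - s R + s R)%C with l in * by ring. lra. }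
  assert (Hsn : s R <> RtoC 0).
  { intros E. rewrite E, Cmod_0 in Hs2. lra. }
  replace (Cinv (s R) - Cinv l)%C with ((l - s R) / (s R * l))%C by (field; auto).
  rewrite Cmod_div by (apply Cmult_neq_0; auto).
  rewrite Cmod_mult, Cmod_sub_sym.
  assert (e <= eps * (Cmod l * Cmod l) / 2) by apply Rmin_r.
  apply Rmult_lt_reg_r with (Cmod (s R) * Cmod l); [nra|].
  unfold Rdiv. rewrite Rmult_assoc, Rinv_l by nra.
  nra.
Qed.

Lemma convC_prod (s : nat -> nat -> C) (l : nat -> C) m :
  (forall i, (i < m)%nat -> convC (s i) (l i)) ->
  convC (fun R => prodC (fun i => s i R) m) (prodC l m).
Proof.
  induction m; intros H.
  - intros eps Heps. exists O. intros R _. simpl. replace (RtoC 1 - RtoC 1)%C with (RtoC 0) by ring.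
    rewrite Cmod_0. auto.
  - simpl. apply convC_mult; [apply IHm; intros; apply H; lia|apply H; lia].
Qed.

Lemma convC_unique s l m : convC s l -> (exists N, forall R, (N <= R)%nat -> s R = m) -> l = m.
Proof.
  intros Hs [N HN].
  destruct (Req_dec (Cmod (l - m)) 0) as [E|E].
  - apply Cmod_eq_0 in E. replace l with ((l - m) + m)%C by ring. rewrite E. ring.
  - exfalso. pose proof (Cmod_ge_0 (l - m)).
    destruct (Hs (Cmod (l - m)) ltac:(lra)) as [N2 HN2].
    specialize (HN2 (Nat.max N N2) ltac:(lia)). rewrite HN in HN2 by lia.
    rewrite Cmod_sub_sym in HN2. lra.
Qed.

Lemma eventually_all (P : nat -> nat -> Prop) m :
  (forall i, (i < m)%nat -> exists N, forall R, (N <= R)%nat -> P i R) ->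
  exists N, forall R, (N <= R)%nat -> forall i, (i < m)%nat -> P i R.
Proof.
  induction m; intros H.
  - exists O. intros; lia.
  - destruct IHm as [N1 HN1]; [intros; apply H; lia|].
    destruct (H m ltac:(lia)) as [N2 HN2].
    exists (Nat.max N1 N2). intros R HR i Hi.
    destruct (Nat.eq_dec i m); [subst; apply HN2; lia| apply HN1; lia].
Qed.
Lemma Cmod_Ew_lt1 w d : 0 < ell w d -> Cmod (Ew w d) < 1.
Proof.
  intros H. rewrite Cmod_Ew. rewrite <- exp_0. apply exp_increasing.
  pose proof PI_RGT_0. nra.
Qed.
Lemma Cmod_Ew_gt1 w d : ell w d < 0 -> 1 < Cmod (Ew w d).
Proof.
  intros H. rewrite Cmod_Ew. rewrite <- exp_0. apply exp_increasing.
  pose proof PI_RGT_0. nra.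
Qed.

Definition fv (w : C * C) (x : C) (v : Z * Z) : C := (1 - x * Ew w v)%C.

Lemma box_conv (w : C * C) (x : C) (c d0 d1 : Z * Z) :
  (crossZ d0 d1 * crossZ d0 d1 = 1)%Z -> 0 < ell w d0 -> 0 < ell w d1 ->
  convC (fun R => prodL (fun v => if inCone c d0 d1 v then fv w x v else RtoC 1) (boxL R))
        (qpoch_lim (x * Ew w c) (Ew w d0) (Ew w d1)).
Proof.
  intros Hd H0 H1 eps Heps.
  destruct (qlim_main (x * Ew w c) (Ew w d0) (Ew w d1) (Cmod_Ew_lt1 _ _ H0) (Cmod_Ew_lt1 _ _ H1))
    as [_ Hq].
  destruct (Hq eps Heps) as [k Hk].
  destruct (cone_R c d0 d1 k) as [R0 HR0].
  exists R0. intros R HR.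
  destruct (cone_K c d0 d1 R) as [K HK].
  unfold fv. rewrite <- (cone_reindex w x c d0 d1 R (Nat.max K k) Hd).
  - apply Hk; [lia|]. intros j0 j1 Hj0 Hj1. apply HR0; auto.
  - intros v Hv Hc. destruct (HK v Hv Hc). lia.
Qed.

Lemma crossZ_cone (e0 e1 : bool) (a b : Z * Z) : crossZ a b = 1%Z ->
  (crossZ (cone_d e0 a) (cone_d e1 b) * crossZ (cone_d e0 a) (cone_d e1 b) = 1)%Z.
Proof.
  intros H. assert (E : crossZ (cone_d e0 a) (cone_d e1 b) = 1%Z \/ crossZ (cone_d e0 a) (cone_d e1 b) = (-1)%Z).
  { destruct a, b, e0, e1; unfold cone_d, vneg, crossZ in *; simpl in *; lia. }
  destruct E as [E|E]; rewrite E; reflexivity.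
Qed.

Lemma ell_cone (w : C * C) (a : Z * Z) : ell w a <> 0 -> 0 < ell w (cone_d (epsb w a) a).
Proof.
  intros H. unfold epsb, cone_d. destruct (Rlt_dec 0 (ell w a)); auto.
  rewrite ell_neg. lra.
Qed.

Lemma Cinv_1 : Cinv (RtoC 1) = RtoC 1.
Proof. apply C_eq; simpl; field. Qed.

Lemma factor_eq (w : C * C) (x : C) (a b : Z * Z) :
  ell w a <> 0 -> ell w b <> 0 ->
  qpoch_finite x (e2pi (crossCZ w a)) (e2pi (- crossCZ w b)) ->
  qpoch x (e2pi (crossCZ w a)) (e2pi (- crossCZ w b)) =
    (if coneS w a b then qpoch_lim (x * Ew w (coneC w a b)) (Ew w (coneD0 w a)) (Ew w (coneD1 w b))
     else Cinv (qpoch_lim (x * Ew w (coneC w a b)) (Ew w (coneD0 w a)) (Ew w (coneD1 w b)))) /\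
  (coneS w a b = false -> qpoch_lim (x * Ew w (coneC w a b)) (Ew w (coneD0 w a)) (Ew w (coneD1 w b)) <> RtoC 0).
Proof.
  intros Ha Hb [F1 F2].
  change (e2pi (crossCZ w a)) with (Ew w a) in *.
  replace (e2pi (- crossCZ w b)) with (Ew w (vneg b)) in * by (unfold Ew; rewrite crossCZ_neg; auto).
  assert (Eb : Ew w (vneg b) = Cinv (Ew w b)) by apply Ew_neg.
  assert (Ea : Ew w (vneg a) = Cinv (Ew w a)) by apply Ew_neg.
  assert (E0 : Ew w (vadd (0%Z, 0%Z) (0%Z, 0%Z)) = RtoC 1) by (rewrite Ew_add, Ew_0; ring).
  assert (Eab : Ew w (vadd (vneg a) b) = (Cinv (Ew w a) * Ew w b)%C) by (rewrite Ew_add, Ea; auto).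
  assert (Ea0 : Ew w (vadd (vneg a) (0%Z, 0%Z)) = Cinv (Ew w a)) by (rewrite Ew_add, Ea, Ew_0; ring).
  assert (E0b : Ew w (vadd (0%Z, 0%Z) b) = Ew w b) by (rewrite Ew_add, Ew_0; ring).
  assert (Einv : Cinv (Cinv (Ew w b)) = Ew w b).
  { unfold Ew. rewrite !Cinv_e2pi. f_equal. ring. }
  unfold coneS, coneC, coneD0, coneD1.
  unfold epsb.
  destruct (Rlt_dec 0 (ell w a)) as [Pa|Pa]; destruct (Rlt_dec 0 (ell w b)) as [Pb|Pb];
    unfold cone_c, cone_d; simpl xorb; cbv iota.
  -
    assert (Q0 : Cmod (Ew w a) < 1) by (apply Cmod_Ew_lt1; auto).
    assert (Q1 : 1 < Cmod (Ew w (vneg b))) by (apply Cmod_Ew_gt1; rewrite ell_neg; lra).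
    unfold qpoch.
    destruct (Rlt_dec (Cmod (Ew w a)) 1); [|lra].
    destruct (Rlt_dec 1 (Cmod (Ew w a))); [lra|].
    destruct (Rlt_dec (Cmod (Ew w (vneg b))) 1); [lra|].
    destruct (Rlt_dec 1 (Cmod (Ew w (vneg b)))); [|lra].
    rewrite E0b, Eb, Einv. split; [f_equal; f_equal; ring|].
    intros _. specialize (F2 Q0 Q1). rewrite Eb, Einv in F2.
    replace (x * Ew w b)%C with (Ew w b * x)%C by ring. auto.
  - assert (Q0 : Cmod (Ew w a) < 1) by (apply Cmod_Ew_lt1; auto).
    assert (Q1 : Cmod (Ew w (vneg b)) < 1) by (apply Cmod_Ew_lt1; rewrite ell_neg; lra).
    unfold qpoch.
    destruct (Rlt_dec (Cmod (Ew w a)) 1); [|lra].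
    destruct (Rlt_dec 1 (Cmod (Ew w a))); [lra|].
    destruct (Rlt_dec (Cmod (Ew w (vneg b))) 1); [|lra].
    rewrite E0. split; [f_equal; ring|]. intros E; discriminate.
  - assert (Q0 : 1 < Cmod (Ew w a)) by (apply Cmod_Ew_gt1; lra).
    assert (Q1 : 1 < Cmod (Ew w (vneg b))) by (apply Cmod_Ew_gt1; rewrite ell_neg; lra).
    unfold qpoch.
    destruct (Rlt_dec (Cmod (Ew w a)) 1); [lra|].
    destruct (Rlt_dec 1 (Cmod (Ew w a))); [|lra].
    destruct (Rlt_dec (Cmod (Ew w (vneg b))) 1); [lra|].
    destruct (Rlt_dec 1 (Cmod (Ew w (vneg b)))); [|lra].
    rewrite Eab, Ea, Eb, Einv. split; [f_equal; ring|]. intros E; discriminate.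
  - assert (Q0 : 1 < Cmod (Ew w a)) by (apply Cmod_Ew_gt1; lra).
    assert (Q1 : Cmod (Ew w (vneg b)) < 1) by (apply Cmod_Ew_lt1; rewrite ell_neg; lra).
    unfold qpoch.
    destruct (Rlt_dec (Cmod (Ew w a)) 1); [lra|].
    destruct (Rlt_dec 1 (Cmod (Ew w a))); [|lra].
    destruct (Rlt_dec (Cmod (Ew w (vneg b))) 1); [|lra].
    rewrite Ea0, Ea. split; [f_equal; f_equal; ring|].
    intros _. specialize (F1 Q0 Q1).
    replace (x * Cinv (Ew w a))%C with (Cinv (Ew w a) * x)%C by ring. auto.
Qed.
Fixpoint cnt (f : nat -> bool) (m : nat) : nat :=
  match m with O => O | S k => (cnt f k + if f k then 1 else 0)%nat end.

Lemma cnt_pos (f : nat -> bool) m : (0 < cnt f m)%nat -> exists i, (i < m)%nat /\ f i = true.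
Proof.
  induction m; simpl; intros H; [lia|].
  destruct (f m) eqn:E; [exists m; split; auto|].
  destruct IHm as [i [Hi Hf]]; [lia|]. exists i; split; auto.
Qed.

Lemma prod_count (s c : nat -> bool) (z : C) m :
  prodC (fun i => if c i then (if s i then z else Cinv z) else RtoC 1) m =
  (Cpow z (cnt (fun i => andb (s i) (c i)) m) * Cpow (Cinv z) (cnt (fun i => andb (negb (s i)) (c i)) m))%C.
Proof.
  induction m; simpl; [ring|]. rewrite IHm.
  destruct (c m), (s m); simpl; rewrite ?Nat.add_0_r, ?Cpow_add_r; simpl; ring.
Qed.

Lemma count_sum (s c : nat -> bool) n :
  (Z.of_nat (cnt (fun i => andb (s i) (c i)) (S n)) - Z.of_nat (cnt (fun i => andb (negb (s i)) (c i)) (S n)))%Z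
  = sumZ (fun i => (pm (s i) * (if c i then 1 else 0))%Z) n.
Proof.
  induction n.
  - simpl. destruct (s 0%nat), (c 0%nat); simpl; reflexivity.
  - cbn [sumZ]. rewrite <- IHn. cbn [cnt].
    destruct (s (S n)), (c (S n)); cbn [andb negb pm]; lia.
Qed.

Lemma pointwise (s c : nat -> bool) (z : C) n (e : bool) :
  sumZ (fun i => (pm (s i) * (if c i then 1 else 0))%Z) n = (if e then 1 else 0)%Z ->
  (forall i, (i < S n)%nat -> s i = false -> c i = true -> z <> RtoC 0) ->
  prodC (fun i => if c i then (if s i then z else Cinv z) else RtoC 1) (S n) = if e then z else RtoC 1.
Proof.
  intros Hs Hz. rewrite prod_count. rewrite <- count_sum in Hs.
  set (P := cnt (fun i => andb (s i) (c i)) (S n)) in *.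
  set (N := cnt (fun i => andb (negb (s i)) (c i)) (S n)) in *.
  assert (HP : P = (N + if e then 1 else 0)%nat) by (destruct e; lia).
  rewrite HP, Cpow_add_r.
  destruct (Nat.eq_dec N 0) as [E|E].
  - rewrite E. destruct e; simpl; ring.
  - assert (HN : (0 < N)%nat) by lia.
    destruct (cnt_pos (fun i => andb (negb (s i)) (c i)) (S n) HN) as [i [Hi Hf]].
    apply andb_prop in Hf. destruct Hf as [Hf1 Hf2]. apply Bool.negb_true_iff in Hf1.
    pose proof (Hz i Hi Hf1 Hf2) as Hz0.
    replace (Cpow z N * Cpow z (if e then 1%nat else 0%nat) * Cpow (Cinv z) N)%C
      with (Cpow z (if e then 1%nat else 0%nat) * Cpow (z * Cinv z) N)%C by (rewrite Cpow_mult_l; ring).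
    rewrite Cinv_r, Cpow_1_l by auto. destruct e; simpl; ring.
Qed.
Theorem corollary5p10 (n : nat) (u : nat -> Z * Z) (z : C) (w : C * C) :
  u (S n) = u O ->
  (forall i, (i <= n)%nat -> crossZ (u i) (u (S i)) = 1%Z) ->
  (* counterclockwise turning angles sum to 2 pi: the fan goes once around *)
  sum_f_R0 (fun i => angleZ (u i) (u (S i))) n = 2 * PI ->
  (forall i, (i <= n)%nat -> Im (crossCZ w (u i)) <> 0) ->
  (forall i, (i <= n)%nat ->
     qpoch_finite (e2pi z) (e2pi (crossCZ w (u i))) (e2pi (- crossCZ w (u (S i))))) ->
  prodC (fun i => qpoch (e2pi z) (e2pi (crossCZ w (u i)))
                        (e2pi (- crossCZ w (u (S i))))) (S n)
  = (RtoC 1 - e2pi z)%C.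
Proof.
  intros Hper Hcr Hsum Him Hfin.
  set (x := e2pi z).
  assert (Hell : forall i, (i <= S n)%nat -> ell w (u i) <> 0).
  { intros i Hi. destruct (Nat.eq_dec i (S n)) as [E|E].
    - subst. rewrite Hper. apply Him. lia.
    - apply Him. lia. }
  set (s := fun i => coneS w (u i) (u (S i))).
  set (Lq := fun i => qpoch_lim (x * Ew w (coneC w (u i) (u (S i)))) (Ew w (coneD0 w (u i)))
                                (Ew w (coneD1 w (u (S i))))).
  set (BP := fun i R => prodL (fun v => if inConeW w (u i) (u (S i)) v then fv w x v else RtoC 1) (boxL R)).
  assert (HF : forall i, (i <= n)%nat ->
     qpoch x (e2pi (crossCZ w (u i))) (e2pi (- crossCZ w (u (S i)))) = (if s i then Lq i else Cinv (Lq i))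
     /\ (s i = false -> Lq i <> RtoC 0)).
  { intros i Hi. apply factor_eq; [apply Hell; lia | apply Hell; lia | apply Hfin; auto]. }
  assert (HB : forall i, (i <= n)%nat -> convC (BP i) (Lq i)).
  { intros i Hi. unfold BP, Lq, inConeW, coneD0, coneD1.
    apply box_conv.
    - apply crossZ_cone. auto.
    - apply ell_cone. apply Hell; lia.
    - apply ell_cone. apply Hell; lia. }
  rewrite (prodC_ext _ (fun i => if s i then Lq i else Cinv (Lq i)))
    by (intros i Hi; apply (HF i ltac:(lia))).
  apply (convC_unique (fun R => prodC (fun i => if s i then BP i R else Cinv (BP i R)) (S n))).
  - apply convC_prod. intros i Hi. destruct (s i) eqn:Es.
    + apply HB. lia.
    + apply (convC_inv (BP i)). apply HB; lia. apply (HF i ltac:(lia)); auto.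
  - destruct (eventually_all (fun i R => s i = false -> BP i R <> RtoC 0) (S n)) as [N HN].
    { intros i Hi. destruct (s i) eqn:Es.
      - exists O. intros; discriminate.
      - pose proof (proj2 (HF i ltac:(lia)) Es) as Hnz.
        assert (Hm : 0 < Cmod (Lq i)) by (apply Cmod_gt_0; auto).
        destruct (HB i ltac:(lia) (Cmod (Lq i) / 2) ltac:(lra)) as [N HN].
        exists N. intros R HR _ E. specialize (HN R HR). rewrite E in HN.
        replace (RtoC 0 - Lq i)%C with (- Lq i)%C in HN by ring. rewrite Cmod_opp in HN. lra. }
    exists N. intros R HR.
    specialize (HN R HR).
    set (h := fun i v => if inConeW w (u i) (u (S i)) v then (if s i then fv w x v else Cinv (fv w x v)) else RtoC 1).
    rewrite (prodC_ext _ (fun i => prodL (h i) (boxL R))).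
    2:{ intros i Hi. unfold h. destruct (s i) eqn:Es.
        - unfold BP. apply prodL_ext. intros v _. destruct (inConeW w (u i) (u (S i)) v); auto.
        - unfold BP. rewrite prodL_inv.
          + apply prodL_ext. intros v _. destruct (inConeW w (u i) (u (S i)) v); auto. apply Cinv_1.
          + apply prodL_nz. apply HN; auto. }
    rewrite prodL_swap.
    rewrite (prodL_ext _ (fun v => if andb (Z.eqb (fst v) 0) (Z.eqb (snd v) 0) then fv w x v else RtoC 1)).
    + rewrite (prodL_single _ (boxL R) (0%Z, 0%Z)).
      * simpl. unfold fv. rewrite Ew_0. ring.
      * apply NoDup_boxL.
      * apply in_boxL. unfold inBox. simpl. apply andb_true_intro; split; apply Z.leb_le; lia.
      * intros [v1 v2] _ Hv. simpl.
        destruct (Z.eqb_spec v1 0), (Z.eqb_spec v2 0); simpl; auto. subst. contradiction.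
    + intros v Hv. unfold h.
      apply (pointwise s (fun i => inConeW w (u i) (u (S i)) v) (fv w x v) n).
      * apply cone_sum; auto. apply Hell; lia.
      * intros i Hi Es Hc. pose proof (prodL_nz _ _ (HN i Hi Es) v Hv) as Hnz.
        simpl in Hnz. rewrite Hc in Hnz. auto.
Qed.
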